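(* Let $\Bbbk$ be a field of characteristic $0$, $B=\bigoplus_{s=1}^N\Bbbk e_s$ ($N\ge2$) a complete set of orthogonal idempotents in $A$, and let $\{\!\{-,-\}\!\}$ be an arbitrary $B$-linear double bracket on $A$. Let $A^f$ be the fusion algebra obtained by fusing $e_2$ onto $e_1$, with the induced double bracket $\{\!\{-,-\}\!\}_{ind}$, the double bracket $\{\!\{-,-\}\!\}_{fus}$, and $\{\!\{-,-\}\!\}^f=\{\!\{-,-\}\!\}_{ind}+\{\!\{-,-\}\!\}_{fus}$. Then the map $\kappa:(A^f)^{\times3}\to(A^f)^{\otimes3}$, $$\kappa=\{\!\{-,-,-\}\!\}^f-\{\!\{-,-,-\}\!\}_{ind}-\{\!\{-,-,-\}\!\}_{fus},$$ vanishes identically, where each term is the triple bracket associated with the corresponding double bracket.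
   Context: Conventions: $\otimes=\otimes_\Bbbk$; Sweedler notation $d=d'\otimes d''$; outer bimodule structure $b(a_1\otimes\cdots\otimes a_n)c=ba_1\otimes\cdots\otimes a_nc$. A $B$-linear double bracket is a $\Bbbk$-bilinear map $A\times A\to A\otimes A$ vanishing when an argument lies in $B$, with $\{\!\{a,b\}\!\}=-\{\!\{b,a\}\!\}''\otimes\{\!\{b,a\}\!\}'$ and $\{\!\{a,bc\}\!\}=\{\!\{a,b\}\!\}c+b\{\!\{a,c\}\!\}$. The triple bracket associated with a double bracket is $\{\!\{a,b,c\}\!\}=\{\!\{a,\{\!\{b,c\}\!\}'\}\!\}\otimes\{\!\{b,c\}\!\}''+\tau\{\!\{b,\{\!\{c,a\}\!\}'\}\!\}\otimes\{\!\{c,a\}\!\}''+\tau^2\{\!\{c,\{\!\{a,b\}\!\}'\}\!\}\otimes\{\!\{a,b\}\!\}''$ with $\tau(a_1\otimes a_2\otimes a_3)=a_3\otimes a_1\otimes a_2$. Fusion: $\mu=1-e_1-e_2$; $\mathrm{Mat}_2(\Bbbk)$ with matrix units $e_{11}=e_1,e_{12},e_{21},e_{22}=e_2$; $\bar A=A*_{\Bbbk e_1\oplus\Bbbk e_2\oplus\Bbbk\mu}(\mathrm{Mat}_2(\Bbbk)\oplus\Bbbk\mu)$; $\epsilon=1-e_2$; $A^f=\epsilon\bar A\epsilon$, an algebra over $B^f=\Bbbk e_1\oplus\bigoplus_{s\ge3}\Bbbk e_s$. $A^f$ is generated by $t$ ($t\in\epsilon A\epsilon$), $e_{12}u$ ($u\in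 e_2A\epsilon$), $ve_{21}$ ($v\in\epsilon Ae_2$), $e_{12}we_{21}$ ($w\in e_2Ae_2$), written $e_+\alpha e_-$ with $\alpha\in A$, $e_+\in\{\epsilon,e_{12}\}$, $e_-\in\{\epsilon,e_{21}\}$. $\{\!\{-,-\}\!\}_{ind}$ is the $B^f$-linear double bracket on $A^f$ with $\{\!\{e_+\alpha e_-,f_+\beta f_-\}\!\}_{ind}=f_+\{\!\{\alpha,\beta\}\!\}'e_-\otimes e_+\{\!\{\alpha,\beta\}\!\}''f_-$ on generators. $\operatorname{Tr}(E_1),\operatorname{Tr}(E_2)$ are the $B^f$-linear derivations $A^f\to A^f\otimes A^f$ with: $\operatorname{Tr}(E_1)(t)=te_1\otimes e_1-e_1\otimes e_1t$, $\operatorname{Tr}(E_2)(t)=0$; $\operatorname{Tr}(E_1)(e_{12}u)=e_{12}ue_1\otimes e_1$, $\operatorname{Tr}(E_2)(e_{12}u)=-e_1\otimes e_{12}u$; $\operatorname{Tr}(E_1)(ve_{21})=-e_1\otimes e_1ve_{21}$, $\operatorname{Tr}(E_2)(ve_{21})=ve_{21}\otimes e_1$; $\operatorname{Tr}(E_1)(e_{12}we_{21})=0$, $\operatorname{Tr}(E_2)(e_{12}we_{21})=e_{12}we_{21}e_1\otimes e_1-e_1\otimes e_1e_{12}we_{21}$. $\{\!\{a,b\}\!\}_{fus}=-\frac12\operatorname{Tr}(E_2)(b)'\operatorname{Tr}(E_1)(a)''\otimes\operatorname{Tr}(E_1)(a)'\operatorname{Tr}(E_2)(b)''+\frac12\operatorname{Tr}(E_1)(b)'\operatorname{Tr}(E_2)(a)''\otimes\operatorname{Tr}(E_2)(a)'\operatorname{Tr}(E_1)(b)''$.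 *)

(* Defs.v *)
From HB Require Import structures.
From mathcomp Require Import all_boot all_algebra.

Set Implicit Arguments.
Unset Strict Implicit.
Unset Printing Implicit Defensive.
Import GRing.Theory.
Local Open Scope ring_scope.

Section Tensors.
Variable K : fieldType.

Section OverModule.
Variable V : lmodType K.

(* A formal tensor  sum_i x_i (x) y_i  of V (x) V (scalars absorbed in x_i). *)
Definition tens2 := seq (V * V).
Definition tens3 := seq (V * V * V).

Definition bilinear_map (U : lmodType K) (f : V -> V -> U) : Prop :=
  (forall (a : K) x x' y, f (a *: x + x') y = a *: f x y + f x' y) /\
  (forall (a : K) x y y', f x (a *: y + y') = a *: f x y + f x y').

Definition trilinear_map (U : lmodType K) (f : V -> V -> V -> U) : Prop :=
  (forall (a : K) x x' y z, f (a *: x + x') y z = a *: f x y z + f x' y z) /\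
  (forall (a : K) x y y' z, f x (a *: y + y') z = a *: f x y z + f x y' z) /\
  (forall (a : K) x y z z', f x y (a *: z + z') = a *: f x y z + f x y z').

(* A formal tensor is zero in V (x) V iff it is killed by every bilinear map
   (universal property of the tensor product over K). *)
Definition tzero2 (t : tens2) : Prop :=
  forall (U : lmodType K) (f : V -> V -> U), bilinear_map f ->
    \sum_(p <- t) f p.1 p.2 = 0.

Definition tzero3 (t : tens3) : Prop :=
  forall (U : lmodType K) (f : V -> V -> V -> U), trilinear_map f ->
    \sum_(p <- t) f p.1.1 p.1.2 p.2 = 0.

Definition tneg2 (t : tens2) : tens2 := [seq (- p.1, p.2) | p <- t].
Definition tneg3 (t : tens3) : tens3 := [seq (- p.1.1, p.1.2, p.2) | p <- t].
Definition tscale2 (c : K) (t : tens2) : tens2 := [seq (c *: p.1, p.2) | p <- t].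
Definition teq2 (t s : tens2) : Prop := tzero2 (t ++ tneg2 s).
Definition teq3 (t s : tens3) : Prop := tzero3 (t ++ tneg3 s).
Definition tflip (t : tens2) : tens2 := [seq (p.2, p.1) | p <- t].
Definition tau3 (t : tens3) : tens3 := [seq (p.2, p.1.1, p.1.2) | p <- t].

End OverModule.

Section OverAlgebra.
Variable R : algType K.

(* outer bimodule structure: b (a1 (x) a2) c = b a1 (x) a2 c *)
Definition tlmul (b : R) (t : tens2 R) : tens2 R := [seq (b * p.1, p.2) | p <- t].
Definition trmul (t : tens2 R) (c : R) : tens2 R := [seq (p.1, p.2 * c) | p <- t].

(* [D] : the (sub)algebra on which the bracket lives, [inB] : membership in
   the base algebra of idempotents.  A B-linear double bracket on D with
   values in D (x) D. *)
Definition double_bracket (D inB : R -> Prop) (br : R -> R -> tens2 R) : Prop :=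
  [/\ (forall x y p, D x -> D y -> p \in br x y -> D p.1 /\ D p.2),
      (forall (a : K) x x' y, D x -> D x' -> D y ->
          teq2 (br (a *: x + x') y) (tscale2 a (br x y) ++ br x' y)),
      (forall (a : K) x y y', D x -> D y -> D y' ->
          teq2 (br x (a *: y + y')) (tscale2 a (br x y) ++ br x y')),
      (forall x y, D x -> D y -> inB x \/ inB y -> tzero2 (br x y)) &
      (forall x y, D x -> D y -> teq2 (br x y) (tneg2 (tflip (br y x))))] /\
  (
      (forall x y z, D x -> D y -> D z ->
          teq2 (br x (y * z)) (trmul (br x y) z ++ tlmul y (br x z)))).

Definition double_derivation (D inB : R -> Prop) (d : R -> tens2 R) : Prop :=
  [/\ (forall x p, D x -> p \in d x -> D p.1 /\ D p.2),
      (forall (a : K) x x', D x -> D x' ->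
          teq2 (d (a *: x + x')) (tscale2 a (d x) ++ d x')),
      (forall x, D x -> inB x -> tzero2 (d x)) &
      (forall x y, D x -> D y -> teq2 (d (x * y)) (trmul (d x) y ++ tlmul x (d y)))].

(* Sweedler: {{a, t'}} (x) t'' *)
Definition sweedler (br : R -> R -> tens2 R) (a : R) (t : tens2 R) : tens3 R :=
  flatten [seq [seq (q.1, q.2, p.2) | q <- br a p.1] | p <- t].

Definition triple_bracket (br : R -> R -> tens2 R) (a b c : R) : tens3 R :=
  sweedler br a (br b c) ++ tau3 (sweedler br b (br c a))
  ++ tau3 (tau3 (sweedler br c (br a b))).

Definition bracket_add (br1 br2 : R -> R -> tens2 R) : R -> R -> tens2 R :=
  fun x y => br1 x y ++ br2 x y.

Definition kappa (br1 br2 : R -> R -> tens2 R) (a b c : R) : tens3 R :=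
  triple_bracket (bracket_add br1 br2) a b c
  ++ tneg3 (triple_bracket br1 a b c) ++ tneg3 (triple_bracket br2 a b c).

(* {{a,b}}_fus built from the derivations Tr(E1), Tr(E2) *)
Definition fus_bracket (E1 E2 : R -> tens2 R) (a b : R) : tens2 R :=
  tscale2 (- (2%:R)^-1) [seq (q.1 * p.2, p.1 * q.2) | p <- E1 a, q <- E2 b]
  ++ tscale2 ((2%:R)^-1) [seq (q.1 * p.2, p.1 * q.2) | p <- E2 a, q <- E1 b].

End OverAlgebra.

Definition alg_hom (R S : algType K) (f : R -> S) : Prop :=
  [/\ (forall (a : K) x y, f (a *: x + y) = a *: f x + f y),
      (forall x y, f (x * y) = f x * f y) & f 1 = 1].

Definition matrix_units (S : algType K) (f11 f12 f21 f22 : S) : Prop :=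
  let f := fun i j : 'I_2 =>
    if val i == 0%N then (if val j == 0%N then f11 else f12)
    else (if val j == 0%N then f21 else f22) in
  forall i j k l : 'I_2, f i j * f k l = (if j == k then f i l else 0).

(* (Abar, iota, g12, g21) is the amalgamated free product
   A *_{K e1 + K e2 + K mu} (Mat_2(K) + K mu), mu = 1 - e1 - e2, where iota
   is the canonical map from A and g12, g21 are the images of the matrix
   units e12, e21 (e11, e22 being identified with e1, e2): universal
   property of the pushout of K-algebras. *)
Definition is_fusion_product (A : algType K) (e1 e2 : A)
    (Abar : algType K) (iota : A -> Abar) (g12 g21 : Abar) : Prop :=
  [/\ alg_hom iota, matrix_units (iota e1) g12 g21 (iota e2) &
      forall (S : algType K) (phi : A -> S) (h12 h21 : S),
        alg_hom phi -> matrix_units (phi e1) h12 h21 (phi e2) ->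
        exists psi : Abar -> S,
          [/\ alg_hom psi, (forall a, psi (iota a) = phi a),
              psi g12 = h12, psi g21 = h21 &
              forall psi' : Abar -> S,
                [/\ alg_hom psi', (forall a, psi' (iota a) = phi a),
                    psi' g12 = h12 & psi' g21 = h21] ->
                forall x, psi' x = psi x]].

Section Fusion.
Variables (A : algType K) (N : nat) (e : nat -> A).
Variables (Abar : algType K) (iota : A -> Abar) (g12 g21 : Abar).

Definition inB (x : A) : Prop :=
  exists c : nat -> K, x = \sum_(1 <= s < N.+1) c s *: e s.

Definition idempotent_system : Prop :=
  [/\ (forall s, (1 <= s <= N)%N -> e s != 0),
      (forall s t, (1 <= s <= N)%N -> (1 <= t <= N)%N ->
          e s * e t = (if s == t then e s else 0)) &
      \sum_(1 <= s < N.+1) e s = 1].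

(* epsilon = 1 - e_2 in Abar, and A^f = epsilon Abar epsilon *)
Definition epsf : Abar := 1 - iota (e 2).
Definition inAf (x : Abar) : Prop := epsf * x * epsf = x.

Definition inBf (x : Abar) : Prop :=
  exists c : nat -> K,
    x = c 1%N *: iota (e 1) + \sum_(3 <= s < N.+1) c s *: iota (e s).

(* e_+ in {epsilon, e12} (true = e12), e_- in {epsilon, e21} (true = e21) *)
Definition eplus (sp : bool) : Abar := if sp then g12 else epsf.
Definition eminus (sm : bool) : Abar := if sm then g21 else epsf.
Definition idemL (sp : bool) : A := if sp then e 2 else 1 - e 2.
Definition idemR (sm : bool) : A := if sm then e 2 else 1 - e 2.
Definition corner (sp sm : bool) (alpha : A) : Prop :=
  idemL sp * alpha * idemR sm = alpha.
Definition gen (sp sm : bool) (alpha : A) : Abar :=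
  eplus sp * iota alpha * eminus sm.

Definition ind_on_generators (br : A -> A -> tens2 A)
    (ind : Abar -> Abar -> tens2 Abar) : Prop :=
  forall (sp sm tp tm : bool) (alpha beta : A),
    corner sp sm alpha -> corner tp tm beta ->
    teq2 (ind (gen sp sm alpha) (gen tp tm beta))
      [seq (eplus tp * iota p.1 * eminus sm, eplus sp * iota p.2 * eminus tm)
         | p <- br alpha beta].

(* values of Tr(E1), Tr(E2) on the generators
   t (F,F), e12 u (T,F), v e21 (F,T), e12 w e21 (T,T) *)
Definition TrE1_on_generators (E1 : Abar -> tens2 Abar) : Prop :=
  forall (sp sm : bool) (alpha : A), corner sp sm alpha ->
    let x := gen sp sm alpha in
    let f1 := iota (e 1) in
    teq2 (E1 x)
      (match sp, sm with
       | false, false => [:: (x * f1, f1); (- f1, f1 * x)]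
       | true, false => [:: (x * f1, f1)]
       | false, true => [:: (- f1, f1 * x)]
       | true, true => [::]
       end).

Definition TrE2_on_generators (E2 : Abar -> tens2 Abar) : Prop :=
  forall (sp sm : bool) (alpha : A), corner sp sm alpha ->
    let x := gen sp sm alpha in
    let f1 := iota (e 1) in
    teq2 (E2 x)
      (match sp, sm with
       | false, false => [::]
       | true, false => [:: (- f1, x)]
       | false, true => [:: (x, f1)]
       | true, true => [:: (x * f1, f1); (- f1, f1 * x)]
       end).

End Fusion.

End Tensors.

(* Main.v *)
Require Import Defs.
From HB Require Import structures.
From mathcomp Require Import all_boot all_algebra.
From mathcomp Require Import ring.
From Stdlib Require Import ClassicalEpsilon.
Import GRing.Theory.
Local Open Scope ring_scope.

Module Gen_.
Set Implicit Arguments.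
Unset Strict Implicit.
Unset Printing Implicit Defensive.
Import GRing.Theory.
Local Open Scope ring_scope.

Definition pb (P : Prop) : bool := if excluded_middle_informative P then true else false.
Lemma pbP P : reflect P (pb P).
Proof. rewrite /pb; case: excluded_middle_informative => h; by constructor. Qed.

Section SubAlg.
Variables (K : fieldType) (R : algType K) (G : R -> Prop).
Definition Gclosed := [/\ G 1, (forall (k : K) x y, G x -> G y -> G (k *: x + y)) &
  (forall x y, G x -> G y -> G (x * y))].
Variable HG : Gclosed.

Definition Gb := fun x => let _ := HG in pb (G x).
Fact Gb_closed : subalg_closed Gb.
Proof.
case: HG => G1 Glin Gmul.
split; first by apply/pbP.
- move=> k x y /pbP hx /pbP hy; apply/pbP; exact: Glin.
- move=> x y /pbP hx /pbP hy; apply/pbP; exact: Gmul.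
Qed.
HB.instance Definition _ := GRing.isSubalgClosed.Build K R Gb (GRing.subalg_closed_semi Gb_closed).

Record subG : predArgType := SubG { subval :> R; _ : Gb subval }.
HB.instance Definition _ := [isSub for subval].
HB.instance Definition _ := [Choice of subG by <:].
HB.instance Definition _ := [SubChoice_isSubAlgebra of subG by <:].

Lemma subval_hom : alg_hom (subval : subG -> R).
Proof. split => //. Qed.
End SubAlg.

Lemma gen_all (K : fieldType) (A R : algType K) (e1 e2 : A) (iota : A -> R) (g12 g21 : R)
  (hfus : is_fusion_product e1 e2 iota g12 g21) (G : R -> Prop)
  (G1 : G 1) (Glin : forall (k : K) x y, G x -> G y -> G (k *: x + y))
  (Gmul : forall x y, G x -> G y -> G (x * y))
  (Gi : forall a, G (iota a)) (G12 : G g12) (G21 : G g21) : forall x, G x.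
Proof.
case: hfus => [ihom mu univ].
have HG : Gclosed G by split.
have mk : forall x, G x -> Gb HG x by move=> x hx; apply/pbP.
pose S := @subG K R G HG.
pose phi : A -> S := fun a => @SubG K R G HG _ (mk _ (Gi a)).
pose h12 : S := @SubG K R G HG _ (mk _ G12).
pose h21 : S := @SubG K R G HG _ (mk _ G21).
have vi : injective (@subval K R G HG) by exact: val_inj.
have hphi : alg_hom phi.
  case: ihom => hl hm h1; split.
  - by move=> a x y; apply: vi; rewrite /= hl.
  - by move=> x y; apply: vi; rewrite /= hm.
  - by apply: vi; rewrite /= h1.
have hmu : matrix_units (phi e1) h12 h21 (phi e2).
  move=> i j k l; apply: vi; have := mu i j k l.
  by case: (val i == 0%N); case: (val j == 0%N); case: (val k == 0%N); case: (val l == 0%N);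
     case: (j == k).
have [psi [hpsi hpi hp12 hp21 _]] := univ _ phi h12 h21 hphi hmu.
have [psi0 [_ _ _ _ uniq0]] := univ _ iota g12 g21 ihom mu.
move=> x.
have H1 : [/\ alg_hom (fun y => subval (psi y)), (forall a, subval (psi (iota a)) = iota a),
     subval (psi g12) = g12 & subval (psi g21) = g21].
    split.
    - case: hpsi => hl hm h1; split.
      + by move=> a y z; rewrite hl.
      + by move=> y z; rewrite hm.
      + by rewrite h1.
    - by move=> a; rewrite hpi.
    - by rewrite hp12.
    - by rewrite hp21.
have H2 : [/\ alg_hom (@id R), (forall a, id (iota a) = iota a), id g12 = g12 & id g21 = g21].
  by split => //; split.
have e1' : subval (psi x) = x.
  have h1 := uniq0 _ H1 x; have h2 := uniq0 _ H2 x; rewrite /= in h1 h2.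
  by rewrite h1 -h2.
rewrite -e1'; case: (psi x) => v /= /pbP //.
Qed.

End Gen_.
Import Gen_.

Module Ev_.
Set Implicit Arguments.
Unset Strict Implicit.
Unset Printing Implicit Defensive.
Import GRing.Theory.
Local Open Scope ring_scope.

Section Ev.
Variables (K : fieldType) (V : lmodType K).

Definition ev2 (U : lmodType K) (t : tens2 V) (h : V -> V -> U) : U :=
  \sum_(p <- t) h p.1 p.2.
Definition ev3 (U : lmodType K) (t : tens3 V) (f : V -> V -> V -> U) : U :=
  \sum_(p <- t) f p.1.1 p.1.2 p.2.

Variable U : lmodType K.
Implicit Types (h : V -> V -> U) (t s : tens2 V).

Lemma ev2_cat t s h : ev2 (t ++ s) h = ev2 t h + ev2 s h.
Proof. by rewrite /ev2 big_cat. Qed.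
Lemma ev2_nil h : ev2 [::] h = 0.
Proof. by rewrite /ev2 big_nil. Qed.
Lemma ev2_cons p t h : ev2 (p :: t) h = h p.1 p.2 + ev2 t h.
Proof. by rewrite /ev2 big_cons. Qed.
Lemma ev3_cat (t s : tens3 V) (f : V -> V -> V -> U) : ev3 (t ++ s) f = ev3 t f + ev3 s f.
Proof. by rewrite /ev3 big_cat. Qed.

Lemma ev2_ext t h h' : (forall x y, h x y = h' x y) -> ev2 t h = ev2 t h'.
Proof. by move=> e; apply: eq_bigr => p _; rewrite e. Qed.
Lemma ev2_ext_in t h h' : (forall p, p \in t -> h p.1 p.2 = h' p.1 p.2) -> ev2 t h = ev2 t h'.
Proof. by move=> e; rewrite /ev2 big_seq_cond [RHS]big_seq_cond; apply: eq_bigr => p /andP[/e]. Qed.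

Lemma ev2_add t h h' : ev2 t (fun x y => h x y + h' x y) = ev2 t h + ev2 t h'.
Proof. by rewrite /ev2 big_split. Qed.
Lemma ev2_scale t (k : K) h : ev2 t (fun x y => k *: h x y) = k *: ev2 t h.
Proof. by rewrite /ev2 scaler_sumr. Qed.
Lemma ev2_opp t h : ev2 t (fun x y => - h x y) = - ev2 t h.
Proof. by rewrite /ev2 sumrN. Qed.
Lemma ev2_zero t : ev2 t (fun _ _ => 0 : U) = 0.
Proof. by rewrite /ev2 big1. Qed.

Definition bil h := bilinear_map h.

Lemma self_add0 (x : U) : x = x + x -> x = 0.
Proof. by move=> e; apply: (addrI x); rewrite addr0 -e. Qed.
Lemma bil0l h y : bil h -> h 0 y = 0.
Proof. by case=> h1 _; have := h1 1 0 0 y; rewrite !scale1r !addr0 => e; exact: (self_add0 e). Qed.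
Lemma bil0r h x : bil h -> h x 0 = 0.
Proof. by case=> _ h2; have := h2 1 x 0 0; rewrite !scale1r !addr0 => e; exact: (self_add0 e). Qed.
Lemma bilDl h x x' y : bil h -> h (x + x') y = h x y + h x' y.
Proof. by case=> h1 _; rewrite -{1}[x]scale1r h1 scale1r. Qed.
Lemma bilDr h x y y' : bil h -> h x (y + y') = h x y + h x y'.
Proof. by case=> _ h2; rewrite -{1}[y]scale1r h2 scale1r. Qed.
Lemma bilZl h (k : K) x y : bil h -> h (k *: x) y = k *: h x y.
Proof. by move=> hb; case: (hb) => h1 _; rewrite -[k *: x]addr0 h1 bil0l // addr0. Qed.
Lemma bilZr h (k : K) x y : bil h -> h x (k *: y) = k *: h x y.
Proof. by move=> hb; case: (hb) => _ h2; rewrite -[k *: y]addr0 h2 bil0r // addr0. Qed.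
Lemma bilNl h x y : bil h -> h (- x) y = - h x y.
Proof. by move=> hb; rewrite -scaleN1r bilZl // scaleN1r. Qed.
Lemma bilNr h x y : bil h -> h x (- y) = - h x y.
Proof. by move=> hb; rewrite -scaleN1r bilZr // scaleN1r. Qed.

Lemma bil_flip h : bil h -> bil (fun x y => h y x).
Proof. by case=> h1 h2; split => *; [apply: h2 | apply: h1]. Qed.

Lemma ev2_tneg2 t h : bil h -> ev2 (tneg2 t) h = - ev2 t h.
Proof. by move=> hb; rewrite /ev2 big_map -sumrN; apply: eq_bigr => p _; rewrite bilNl. Qed.
Lemma ev2_tscale2 (k : K) t h : bil h -> ev2 (tscale2 k t) h = k *: ev2 t h.
Proof. by move=> hb; rewrite /ev2 big_map scaler_sumr; apply: eq_bigr => p _; rewrite bilZl. Qed.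
Lemma ev2_tflip t h : ev2 (tflip t) h = ev2 t (fun x y => h y x).
Proof. by rewrite /ev2 big_map. Qed.

Lemma tzero2_ev t h : tzero2 t -> bil h -> ev2 t h = 0.
Proof. by move=> z hb; apply: z. Qed.

Lemma teq2_ev t s h : teq2 t s -> bil h -> ev2 t h = ev2 s h.
Proof.
move=> z hb; have := z U h hb; rewrite big_cat /= -/(ev2 _ _) -/(ev2 _ _).
by rewrite ev2_tneg2 // => /eqP; rewrite subr_eq0 => /eqP.
Qed.

End Ev.

Lemma ev_teq2 (K : fieldType) (V : lmodType K) (t s : tens2 V) :
  (forall (U : lmodType K) (h : V -> V -> U), bil h -> ev2 t h = ev2 s h) -> teq2 t s.
Proof.
move=> e U h hb; rewrite big_cat /= -/(ev2 _ _) -/(ev2 _ _) ev2_tneg2 // e //.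
by rewrite subrr.
Qed.

Lemma ev_tzero2 (K : fieldType) (V : lmodType K) (t : tens2 V) :
  (forall (U : lmodType K) (h : V -> V -> U), bil h -> ev2 t h = 0) -> tzero2 t.
Proof. by move=> e U h hb; apply: e. Qed.

End Ev_.
Import Ev_.

Module Br_.
Set Implicit Arguments.
Unset Strict Implicit.
Unset Printing Implicit Defensive.
Import GRing.Theory.
Local Open Scope ring_scope.

Section Br.
Variables (K : fieldType) (R : algType K) (eps : R).
Hypothesis Heps : eps * eps = eps.
#[local] Set Default Proof Using "Heps".

Definition rho (x : R) := eps * x * eps.
Definition Dp (x : R) : Prop := eps * x * eps = x.
Definition allD (t : tens2 R) := forall p, p \in t -> Dp p.1 /\ Dp p.2.
Definition lin (phi : R -> R) := forall (k : K) x y, phi (k *: x + y) = k *: phi x + phi y.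

Lemma DlE x : Dp x -> eps * x = x.
Proof. by rewrite /Dp => e; rewrite -{1}e !mulrA Heps. Qed.
Lemma DrE x : Dp x -> x * eps = x.
Proof. by rewrite /Dp => e; rewrite -{1}e -!mulrA Heps !mulrA. Qed.
Lemma rhoD x : Dp (rho x).
Proof. by rewrite /Dp /rho !mulrA Heps -!mulrA Heps. Qed.
Lemma rho_id x : Dp x -> rho x = x.
Proof. by []. Qed.
Lemma rho_lin : lin rho.
Proof. by move=> k x y; rewrite /rho mulrDr mulrDl -scalerAr -scalerAl. Qed.
Lemma D_lin k x y : Dp x -> Dp y -> Dp (k *: x + y).
Proof. by move=> hx hy; rewrite /Dp -/(rho _) rho_lin /rho hx hy. Qed.
Lemma D0 : Dp 0.
Proof. by rewrite /Dp mulr0 mul0r. Qed.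
Lemma D_add x y : Dp x -> Dp y -> Dp (x + y).
Proof. by move=> hx hy; rewrite -[x]scale1r; apply: D_lin. Qed.
Lemma D_scale k x : Dp x -> Dp (k *: x).
Proof. by move=> hx; rewrite -[_ *: _]addr0; apply: D_lin => //; apply: D0. Qed.
Lemma D_opp x : Dp x -> Dp (- x).
Proof. by move=> hx; rewrite -scaleN1r; apply: D_scale. Qed.
Lemma D_mul x y : Dp x -> Dp y -> Dp (x * y).
Proof. by move=> hx hy; rewrite /Dp mulrA DlE // -mulrA DrE. Qed.
Lemma D_eps : Dp eps.
Proof. by rewrite /Dp !Heps. Qed.

Lemma lin_id : lin id. Proof. by []. Qed.
Lemma lin_mulr a : lin (fun x => x * a).
Proof. by move=> k x y; rewrite mulrDl -scalerAl. Qed.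
Lemma lin_mull a : lin (fun x => a * x).
Proof. by move=> k x y; rewrite mulrDr -scalerAr. Qed.
Lemma lin_comp f g : lin f -> lin g -> lin (fun x => f (g x)).
Proof. by move=> hf hg k x y; rewrite hg hf. Qed.

Variable U : lmodType K.
Implicit Types (h : R -> R -> U) (t s : tens2 R).

Definition bilD h := bil (fun x y => h (rho x) (rho y)).

Lemma bil_ext h h' : bil h -> (forall x y, h x y = h' x y) -> bil h'.
Proof.
move=> [h1 h2] e; split => *; rewrite -!e; [exact: h1 | exact: h2].
Qed.

Lemma bil_map h (f g : R -> R) : bil h -> lin f -> lin g -> bil (fun x y => h (f x) (g y)).
Proof.
move=> [h1 h2] hf hg; split => *; rewrite ?hf ?hg; [exact: h1 | exact: h2].
Qed.

Lemma bil_bilD h : bil h -> bilD h.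
Proof. by move=> hb; apply: bil_map => //; apply: rho_lin. Qed.

Lemma bilD_map h (f g : R -> R) : bilD h -> lin f -> lin g ->
  (forall x, Dp x -> Dp (f x)) -> (forall x, Dp x -> Dp (g x)) ->
  bilD (fun x y => h (f x) (g y)).
Proof.
move=> hb hf hg Df Dg.
apply: (bil_ext (h := fun x y => (fun x y => h (rho x) (rho y)) (f (rho x)) (g (rho y)))).
  apply: (bil_map (h := fun x y => h (rho x) (rho y)) (f := fun x => f (rho x)) (g := fun y => g (rho y))) => //;
  by apply: lin_comp => //; apply: rho_lin.
by move=> x y /=; rewrite (rho_id (Df _ (rhoD x))) (rho_id (Dg _ (rhoD y))).
Qed.

Lemma bil_add h h' : bil h -> bil h' -> bil (fun x y => h x y + h' x y).
Proof.
move=> [a1 a2] [b1 b2]; split => *; [rewrite a1 b1 | rewrite a2 b2]; by rewrite scalerDr addrACA.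
Qed.
Lemma bil_scale h (k : K) : bil h -> bil (fun x y => k *: h x y).
Proof. by move=> [a1 a2]; split => *; rewrite ?a1 ?a2 scalerDr !scalerA mulrC. Qed.
Lemma bilD_add h h' : bilD h -> bilD h' -> bilD (fun x y => h x y + h' x y).
Proof. exact: bil_add. Qed.
Lemma bilD_scale h (k : K) : bilD h -> bilD (fun x y => k *: h x y).
Proof. exact: bil_scale. Qed.
Lemma bilD_sub h h' : bilD h -> bilD h' -> bilD (fun x y => h x y - h' x y).
Proof.
move=> a b; apply: (bil_ext (h := fun x y => h (rho x) (rho y) + (-1) *: h' (rho x) (rho y))).
  by apply: bil_add => //; apply: bil_scale.
by move=> x y; rewrite scaleN1r.
Qed.

Lemma bilD_flip h : bilD h -> bilD (fun x y => h y x).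
Proof. by case=> h1 h2; split => *; [apply: h2 | apply: h1]. Qed.

Lemma bilDZl h k x y : bilD h -> Dp x -> Dp y -> h (k *: x) y = k *: h x y.
Proof.
move=> hb hx hy; have := bilZl k x y hb => /=.
by rewrite (rho_id (D_scale k hx)) !rho_id.
Qed.
Lemma bilDZr h k x y : bilD h -> Dp x -> Dp y -> h x (k *: y) = k *: h x y.
Proof.
move=> hb hx hy; have := bilZr k x y hb => /=.
by rewrite (rho_id (D_scale k hy)) !rho_id.
Qed.
Lemma bilDNl h x y : bilD h -> Dp x -> Dp y -> h (- x) y = - h x y.
Proof. by move=> hb hx hy; rewrite -[- x]scaleN1r (bilDZl _ hb hx hy) scaleN1r. Qed.
Lemma bilDNr h x y : bilD h -> Dp x -> Dp y -> h x (- y) = - h x y.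
Proof. by move=> hb hx hy; rewrite -[- y]scaleN1r (bilDZr _ hb hx hy) scaleN1r. Qed.
Lemma bilDDl h x x' y : bilD h -> Dp x -> Dp x' -> Dp y -> h (x + x') y = h x y + h x' y.
Proof.
move=> hb hx hx' hy; have := bilDl x x' y hb => /=.
by rewrite (rho_id (D_add hx hx')) !rho_id.
Qed.
Lemma bilDDr h x y y' : bilD h -> Dp x -> Dp y -> Dp y' -> h x (y + y') = h x y + h x y'.
Proof.
move=> hb hx hy hy'; have := bilDr x y y' hb => /=.
by rewrite (rho_id (D_add hy hy')) !rho_id.
Qed.
Lemma bilD0l h y : bilD h -> Dp y -> h 0 y = 0.
Proof. by move=> hb hy; have := bil0l y hb => /=; rewrite (rho_id D0) rho_id. Qed.
Lemma bilD0r h x : bilD h -> Dp x -> h x 0 = 0.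
Proof. by move=> hb hx; have := bil0r x hb => /=; rewrite (rho_id D0) rho_id. Qed.

Lemma ev2D t h : allD t -> bilD h -> ev2 t h = ev2 t (fun x y => h (rho x) (rho y)).
Proof. by move=> ha hb; apply: ev2_ext_in => p /ha [h1 h2]; rewrite !rho_id. Qed.

Lemma teq2_evD t s h : teq2 t s -> allD t -> allD s -> bilD h -> ev2 t h = ev2 s h.
Proof. by move=> e ht hs hb; rewrite (ev2D ht hb) (ev2D hs hb); apply: teq2_ev. Qed.

Lemma tzero2_evD t h : tzero2 t -> allD t -> bilD h -> ev2 t h = 0.
Proof. by move=> z ht hb; rewrite (ev2D ht hb); apply: tzero2_ev. Qed.

Lemma ev2_tscale2D k t h : allD t -> bilD h -> ev2 (tscale2 k t) h = k *: ev2 t h.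
Proof.
move=> ht hb; rewrite /ev2 big_map scaler_sumr big_seq_cond [RHS]big_seq_cond.
by apply: eq_bigr => p /andP[/ht[h1 h2] _] /=; rewrite (bilDZl _ hb h1 h2).
Qed.

Lemma ev2_tneg2D t h : allD t -> bilD h -> ev2 (tneg2 t) h = - ev2 t h.
Proof.
move=> ht hb; rewrite /ev2 big_map -sumrN big_seq_cond [RHS]big_seq_cond.
by apply: eq_bigr => p /andP[/ht[h1 h2] _] /=; rewrite (bilDNl hb h1 h2).
Qed.

Lemma allD_cat t s : allD t -> allD s -> allD (t ++ s).
Proof. by move=> ht hs p; rewrite mem_cat => /orP[/ht|/hs]. Qed.
Lemma allD_tscale2 k t : allD t -> allD (tscale2 k t).
Proof. by move=> ht p /mapP[q /ht[h1 h2] ->]; split => //; apply: D_scale. Qed.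
Lemma allD_tneg2 t : allD t -> allD (tneg2 t).
Proof. by move=> ht p /mapP[q /ht[h1 h2] ->]; split => //; apply: D_opp. Qed.
Lemma allD_tflip t : allD t -> allD (tflip t).
Proof. by move=> ht p /mapP[q /ht[h1 h2] ->]; split. Qed.
Lemma allD_trmul t z : allD t -> Dp z -> allD (trmul t z).
Proof. by move=> ht hz p /mapP[q /ht[h1 h2] ->]; split => //; apply: D_mul. Qed.
Lemma allD_tlmul t z : allD t -> Dp z -> allD (tlmul z t).
Proof. by move=> ht hz p /mapP[q /ht[h1 h2] ->]; split => //; apply: D_mul. Qed.

Section Bracket.
Variables (inB : R -> Prop) (Q : R -> R -> tens2 R).
Hypothesis hQ : double_bracket Dp inB Q.
#[local] Set Default Proof Using "All".

Lemma Q_allD x y : Dp x -> Dp y -> allD (Q x y).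
Proof. by case: hQ => [[hv _ _ _ _] _] hx hy p; apply: hv. Qed.

Lemma evQ_lin2 a k x y h : Dp a -> Dp x -> Dp y -> bilD h ->
  ev2 (Q a (k *: x + y)) h = k *: ev2 (Q a x) h + ev2 (Q a y) h.
Proof.
case: hQ => [[hv h1 h2 _ _] _] ha hx hy hb.
rewrite (teq2_evD (h2 k a x y ha hx hy)) ?ev2_cat ?ev2_tscale2D //;
  try apply: allD_cat; try apply: allD_tscale2; try apply: Q_allD => //.
exact: D_lin.
Qed.

Lemma evQ_lin1 a k x y h : Dp a -> Dp x -> Dp y -> bilD h ->
  ev2 (Q (k *: x + y) a) h = k *: ev2 (Q x a) h + ev2 (Q y a) h.
Proof.
case: hQ => [[hv h1 h2 _ _] _] ha hx hy hb.
rewrite (teq2_evD (h1 k x y a hx hy ha)) ?ev2_cat ?ev2_tscale2D //;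
  try apply: allD_cat; try apply: allD_tscale2; try apply: Q_allD => //.
exact: D_lin.
Qed.

Lemma evQ_B x y h : Dp x -> Dp y -> inB x \/ inB y -> bilD h -> ev2 (Q x y) h = 0.
Proof.
case: hQ => [[hv _ _ hz _] _] hx hy hxy hb.
by apply: tzero2_evD => //; [apply: hz | apply: Q_allD].
Qed.

Lemma evQ_skew x y h : Dp x -> Dp y -> bilD h ->
  ev2 (Q x y) h = - ev2 (Q y x) (fun u v => h v u).
Proof.
case: hQ => [[hv _ _ _ hs] _] hx hy hb.
rewrite (teq2_evD (hs x y hx hy)) ?ev2_tneg2D ?ev2_tflip //;
  try apply: allD_tneg2; try apply: allD_tflip; try apply: Q_allD => //;
  exact: bilD_flip.
Qed.

Lemma evQ_mul2 x y z h : Dp x -> Dp y -> Dp z -> bilD h ->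
  ev2 (Q x (y * z)) h = ev2 (Q x y) (fun u v => h u (v * z)) + ev2 (Q x z) (fun u v => h (y * u) v).
Proof.
case: hQ => [_ hl] hx hy hz hb.
rewrite (teq2_evD (hl x y z hx hy hz)) ?ev2_cat; first by rewrite /ev2 !big_map.
- by apply: Q_allD => //; apply: D_mul.
- by apply: allD_cat; [apply: allD_trmul | apply: allD_tlmul]; try apply: Q_allD.
- done.
Qed.

Lemma bilD_mr h z : bilD h -> Dp z -> bilD (fun u v => h u (v * z)).
Proof.
move=> hb hz; apply: (bilD_map (f := id) (g := fun v => v * z)) => //;
  [apply: lin_mulr | by move=> x hx; apply: D_mul].
Qed.
Lemma bilD_ml h z : bilD h -> Dp z -> bilD (fun u v => h (z * u) v).
Proof.
move=> hb hz; apply: (bilD_map (f := fun v => z * v) (g := id)) => //;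
  [apply: lin_mull | by move=> x hx; apply: D_mul].
Qed.
Lemma bilD_mr1 h z : bilD h -> Dp z -> bilD (fun u v => h (u * z) v).
Proof.
move=> hb hz; apply: (bilD_map (f := fun v => v * z) (g := id)) => //;
  [apply: lin_mulr | by move=> x hx; apply: D_mul].
Qed.
Lemma bilD_ml2 h z : bilD h -> Dp z -> bilD (fun u v => h u (z * v)).
Proof.
move=> hb hz; apply: (bilD_map (f := id) (g := fun v => z * v)) => //;
  [apply: lin_mull | by move=> x hx; apply: D_mul].
Qed.

Lemma evQ_mul1 x y z h : Dp x -> Dp y -> Dp z -> bilD h ->
  ev2 (Q (x * y) z) h = ev2 (Q x z) (fun u v => h (u * y) v) + ev2 (Q y z) (fun u v => h u (x * v)).
Proof.
move=> hx hy hz hb.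
rewrite evQ_skew ?evQ_mul2 //; try apply: D_mul => //; try apply: bilD_flip => //.
rewrite opprD (evQ_skew (x := x)) ?(evQ_skew (x := y)) //; try apply: bilD_ml2 => //;
  try apply: bilD_mr1 => //; try apply: bilD_flip => //.

Qed.

End Bracket.
End Br.

End Br_.
Import Br_.

Module Lc_.
Set Implicit Arguments.
Unset Strict Implicit.
Unset Printing Implicit Defensive.
Import GRing.Theory.
Local Open Scope ring_scope.

Section Lc.
Variables (K : fieldType) (U : lmodType K).
Definition lc (xs : seq U) (c : nat -> K) : U := \sum_(i < size xs) c i *: xs`_i.
Lemma lcD xs c d : lc xs c + lc xs d = lc xs (fun i => c i + d i).
Proof. by rewrite /lc -big_split; apply: eq_bigr => i _; rewrite scalerDl. Qed.
Lemma lcZ xs (k : K) c : k *: lc xs c = lc xs (fun i => k * c i).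
Proof. by rewrite /lc scaler_sumr; apply: eq_bigr => i _; rewrite scalerA. Qed.
Lemma lcN xs c : - lc xs c = lc xs (fun i => - c i).
Proof. by rewrite /lc -sumrN; apply: eq_bigr => i _; rewrite scaleNr. Qed.
Lemma lc0 xs : 0 = lc xs (fun _ => 0).
Proof. by rewrite /lc big1 // => i _; rewrite scale0r. Qed.
Lemma lcX xs j : (j < size xs)%N -> xs`_j = lc xs (fun i => (i == j)%:R).
Proof.
move=> hj; rewrite /lc (bigD1 (Ordinal hj)) //= eqxx scale1r big1 ?addr0 //.
by move=> i /negbTE; rewrite -val_eqE /= => ->; rewrite scale0r.
Qed.
Lemma lc_eq xs c d : (forall i, (i < size xs)%N -> c i = d i) -> lc xs c = lc xs d.
Proof. by move=> e; apply: eq_bigr => i _; rewrite e. Qed.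
End Lc.

Ltac lc_fold := repeat progress rewrite ?lcD ?lcZ ?lcN.
Ltac lc_close := apply: lc_eq; case=> [|[|[|[|[|[|[|[|[|[|[|[|[|[|?]]]]]]]]]]]]]] _ /=; ring.



End Lc_.
Import Lc_.

Module Tr_.
Set Implicit Arguments.
Unset Strict Implicit.
Unset Printing Implicit Defensive.
Import GRing.Theory.
Local Open Scope ring_scope.

Section Tr.
Variables (K : fieldType) (R : algType K) (U : lmodType K).
Implicit Types (f : R -> R -> R -> U).

Definition tril f := trilinear_map f.
Definition rot f : R -> R -> R -> U := fun x y z => f z x y.
Definition rot2 f : R -> R -> R -> U := fun x y z => f y z x.
Definition fR (d : R) f : R -> R -> R -> U := fun x y z => f x y (z * d).
Definition fL (c : R) f : R -> R -> R -> U := fun x y z => f (c * x) y z.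

Definition SW (Q : R -> R -> tens2 R) (a : R) (t : tens2 R) f : U :=
  ev2 t (fun x z => ev2 (Q a x) (fun u v => f u v z)).
Definition Tv (Q : R -> R -> tens2 R) a b c f : U :=
  SW Q a (Q b c) f + SW Q b (Q c a) (rot f) + SW Q c (Q a b) (rot2 f).

Lemma ev3_sweedler Q a t f : ev3 (sweedler Q a t) f = SW Q a t f.
Proof.
rewrite /ev3 /sweedler big_flatten /= big_map /SW /ev2; apply: eq_bigr => p _.
by rewrite big_map.
Qed.
Lemma ev3_tau3 (t : tens3 R) f : ev3 (tau3 t) f = ev3 t (rot f).
Proof. by rewrite /ev3 big_map. Qed.
Lemma ev3_tneg3 (t : tens3 R) f : tril f -> ev3 (tneg3 t) f = - ev3 t f.
Proof.
case=> h1 [_ _].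
have f0 : forall y z, f 0 y z = 0.
  by move=> y z; have := h1 1 0 0 y z; rewrite !scale1r !addr0 => e; exact: self_add0 e.
rewrite /ev3 big_map -sumrN; apply: eq_bigr => p _ /=.
have := h1 (-1) p.1.1 0 p.1.2 p.2; rewrite !addr0 f0 addr0 !scaleN1r => e; exact: e.
Qed.
Lemma SW_add Q1 Q2 a (t s : tens2 R) f :
  SW (bracket_add Q1 Q2) a (t ++ s) f = SW Q1 a t f + SW Q2 a t f + SW Q1 a s f + SW Q2 a s f.
Proof.
rewrite /SW ev2_cat /bracket_add.
have E : forall u, ev2 u (fun x z => ev2 (Q1 a x ++ Q2 a x) (fun u0 v => f u0 v z)) =
   ev2 u (fun x z => ev2 (Q1 a x) (fun u0 v => f u0 v z)) + ev2 u (fun x z => ev2 (Q2 a x) (fun u0 v => f u0 v z)).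
  by move=> u; rewrite -ev2_add; apply: ev2_ext => x z; rewrite ev2_cat.
by rewrite !E addrA.
Qed.

Lemma ev3_kgen (t t1 t2 : tens3 R) f : tril f ->
  ev3 (t ++ tneg3 t1 ++ tneg3 t2) f = ev3 t f - ev3 t1 f - ev3 t2 f.
Proof. by move=> hf; rewrite !ev3_cat !ev3_tneg3 // addrA. Qed.

Lemma ev3_triple Q a b c f : ev3 (triple_bracket Q a b c) f = Tv Q a b c f.
Proof. by rewrite /triple_bracket !ev3_cat !ev3_tau3 !ev3_sweedler addrA. Qed.

Lemma tril_rot f : tril f -> tril (rot f).
Proof. by case=> h1 [h2 h3]; split; [|split] => * /=; rewrite /rot; [apply: h2|apply: h3|apply: h1]. Qed.
Lemma tril_rot2 f : tril f -> tril (rot2 f).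
Proof. by case=> h1 [h2 h3]; split; [|split] => * /=; rewrite /rot2; [apply: h3|apply: h1|apply: h2]. Qed.
Lemma tril_fR d f : tril f -> tril (fR d f).
Proof. by case=> h1 [h2 h3]; split; [|split] => * /=; rewrite /fR ?mulrDl -?scalerAl; [apply: h1|apply: h2|apply: h3]. Qed.
Lemma tril_fL c f : tril f -> tril (fL c f).
Proof. by case=> h1 [h2 h3]; split; [|split] => * /=; rewrite /fL ?mulrDr -?scalerAr; [apply: h1|apply: h2|apply: h3]. Qed.
Lemma tril_bil12 f z : tril f -> bil (fun x y => f x y z).
Proof. by case=> h1 [h2 h3]; split => *; [apply: h1|apply: h2]. Qed.
Lemma tril_bil13 f y : tril f -> bil (fun x z => f x y z).
Proof. by case=> h1 [h2 h3]; split => *; [apply: h1|apply: h3]. Qed.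
Lemma tril_bil23 f x : tril f -> bil (fun y z => f x y z).
Proof. by case=> h1 [h2 h3]; split => *; [apply: h2|apply: h3]. Qed.

Lemma ev2_lin3 (t : tens2 R) f k z z' : tril f ->
  ev2 t (fun u v => f u v (k *: z + z')) = k *: ev2 t (fun u v => f u v z) + ev2 t (fun u v => f u v z').
Proof.
case=> _ [_ h3]; rewrite -ev2_scale -ev2_add; apply: ev2_ext => x y; exact: h3.
Qed.

Lemma lin_mr (a : R) : lin (fun x => x * a).
Proof. by move=> k x y; rewrite mulrDl -scalerAl. Qed.
Lemma lin_ml (a : R) : lin (fun x => a * x).
Proof. by move=> k x y; rewrite mulrDr -scalerAr. Qed.
Lemma lin_i : lin (@id R). Proof. by []. Qed.
Lemma lin_c (g h : R -> R) : lin g -> lin h -> lin (fun x => g (h x)).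
Proof. by move=> hg hh k x y; rewrite hh hg. Qed.

Lemma bilg_map (h : R -> R -> U) (p q : R -> R) : bil h -> lin p -> lin q -> bil (fun x y => h (p x) (q y)).
Proof. by move=> [h1 h2] hp hq; split => *; rewrite ?hp ?hq; [apply: h1 | apply: h2]. Qed.

Section Atoms.
Variables (f : R -> R -> R -> U) (p q : R -> R) (z : R).
Hypotheses (hf : tril f) (hp : lin p) (hq : lin q).
Lemma bil_f12 : bil (fun w v => f (p w) (q v) z).
Proof. exact: (bilg_map (h := fun x y => f x y z)) (tril_bil12 z hf) hp hq. Qed.
Lemma bil_f13 : bil (fun w v => f (p w) z (q v)).
Proof. exact: (bilg_map (h := fun x y => f x z y)) (tril_bil13 z hf) hp hq. Qed.
Lemma bil_f23 : bil (fun w v => f z (p w) (q v)).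
Proof. exact: (bilg_map (h := fun x y => f z x y)) (tril_bil23 z hf) hp hq. Qed.
Lemma bil_f21 : bil (fun w v => f (q v) (p w) z).
Proof. exact: (bilg_map (h := fun x y => f y x z)) (bil_flip (tril_bil12 z hf)) hp hq. Qed.
Lemma bil_f31 : bil (fun w v => f (q v) z (p w)).
Proof. exact: (bilg_map (h := fun x y => f y z x)) (bil_flip (tril_bil13 z hf)) hp hq. Qed.
Lemma bil_f32 : bil (fun w v => f z (q v) (p w)).
Proof. exact: (bilg_map (h := fun x y => f z y x)) (bil_flip (tril_bil23 z hf)) hp hq. Qed.
End Atoms.

Lemma bilg_add (h h' : R -> R -> U) : bil h -> bil h' -> bil (fun x y => h x y + h' x y).
Proof. move=> [a1 a2] [b1 b2]; split => *; [rewrite a1 b1 | rewrite a2 b2]; by rewrite scalerDr addrACA. Qed.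
Lemma bilg_scale (h : R -> R -> U) (k : K) : bil h -> bil (fun x y => k *: h x y).
Proof. by move=> [a1 a2]; split => *; rewrite ?a1 ?a2 scalerDr !scalerA mulrC. Qed.

Variable eps : R.
Hypothesis Heps : eps * eps = eps.
Local Notation Dp := (Dp eps).
Local Notation rho := (rho eps).
Local Notation bilD := (@bilD K R eps U).

Variables (inB : R -> Prop) (Q : R -> R -> tens2 R).
Hypothesis hQ : double_bracket Dp inB Q.

Lemma SW_bilD a f : Dp a -> tril f -> bilD (fun x z => ev2 (Q a x) (fun u v => f u v z)).
Proof.
move=> ha hf; split.
- move=> k x x' z /=; rewrite rho_lin // (evQ_lin2 Heps hQ k ha (rhoD Heps x) (rhoD Heps x')) //.
  by apply: bil_bilD => //; apply: tril_bil12.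
- by move=> k x z z' /=; rewrite rho_lin // ev2_lin3.
Qed.

Lemma bil_ev2 (t : tens2 R) (H : R -> R -> R -> R -> U) :
  (forall u v, bil (fun x z => H x z u v)) -> bil (fun x z => ev2 t (H x z)).
Proof.
move=> hb; split.
- move=> k x x' z; rewrite -ev2_scale -ev2_add; apply: ev2_ext => u v.
  by case: (hb u v) => h1 _; apply: h1.
- move=> k x z z'; rewrite -ev2_scale -ev2_add; apply: ev2_ext => u v.
  by case: (hb u v) => _ h2; apply: h2.
Qed.

Lemma Tv_der a b c d f : Dp a -> Dp b -> Dp c -> Dp d -> tril f ->
  Tv Q a b (c * d) f = Tv Q a b c (fR d f) + Tv Q a b d (fL c f).
Proof.
move=> ha hb hc hd hf.
have hcd : Dp (c * d) by apply: D_mul.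
rewrite /Tv.
have -> : SW Q a (Q b (c * d)) f = SW Q a (Q b c) (fR d f) + SW Q a (Q b d) (fL c f) +
   ev2 (Q b d) (fun x z => ev2 (Q a c) (fun u v => f u (v * x) z)).
  rewrite /SW (evQ_mul2 Heps hQ hb hc hd); last exact: SW_bilD.
  rewrite -addrA; congr (_ + _); rewrite -ev2_add; apply: ev2_ext_in => p hp.
  have [h1 h2] := Q_allD Heps U hQ hb hd hp.
  rewrite (evQ_mul2 Heps hQ ha hc h1) //; first by rewrite addrC.
  by apply: bil_bilD => //; apply: tril_bil12.
have -> : SW Q b (Q (c * d) a) (rot f) = SW Q b (Q c a) (rot (fR d f)) + SW Q b (Q d a) (rot (fL c f)) +
   ev2 (Q c a) (fun x z => ev2 (Q b d) (fun u v => f z (x * u) v)).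
  rewrite /SW (evQ_mul1 Heps hQ hc hd ha); last by apply: SW_bilD => //; apply: tril_rot.
  rewrite addrAC; congr (_ + _); rewrite -ev2_add; apply: ev2_ext_in => p hp.
  have [h1 h2] := Q_allD Heps U hQ hc ha hp.
  rewrite (evQ_mul2 Heps hQ hb h1 hd) //.
  by apply: bil_bilD => //; apply: (tril_bil12 _ (tril_rot hf)).
have -> : SW Q (c * d) (Q a b) (rot2 f) = SW Q c (Q a b) (rot2 (fR d f)) + SW Q d (Q a b) (rot2 (fL c f)).
  rewrite /SW -ev2_add; apply: ev2_ext_in => p hp.
  have [h1 h2] := Q_allD Heps U hQ ha hb hp.
  rewrite (evQ_mul1 Heps hQ hc hd h1) //.
  by apply: bil_bilD => //; apply: (tril_bil12 _ (tril_rot2 hf)).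
have X : ev2 (Q c a) (fun x z => ev2 (Q b d) (fun u v => f z (x * u) v)) =
         - ev2 (Q b d) (fun x z => ev2 (Q a c) (fun u v => f u (v * x) z)).
  rewrite (evQ_skew Heps hQ hc ha); last first.
    apply: bil_bilD => //; apply: bil_ev2 => u v; case: hf => h1 [h2 h3]; split => *.
      by rewrite mulrDl -scalerAl h2.
    exact: h1.
  congr (- _); rewrite /ev2 exchange_big /=; apply: eq_bigr => p _; apply: eq_bigr => q _ //.
move: X; set X1 := ev2 (Q b d) _; set X2 := ev2 (Q c a) _ => ->.
set A1 := SW Q a (Q b c) _; set A2 := SW Q a (Q b d) _.
set B1 := SW Q b (Q c a) _; set B2 := SW Q b (Q d a) _.
set C1 := SW Q c (Q a b) _; set C2 := SW Q d (Q a b) _.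
set xs := [:: A1; A2; B1; B2; C1; C2; X1].
have e1 : A1 = lc xs (fun i => (i == 0)%:R) by apply: (@lcX _ _ xs 0).
have e2 : A2 = lc xs (fun i => (i == 1)%:R) by apply: (@lcX _ _ xs 1).
have e3 : B1 = lc xs (fun i => (i == 2)%:R) by apply: (@lcX _ _ xs 2).
have e4 : B2 = lc xs (fun i => (i == 3)%:R) by apply: (@lcX _ _ xs 3).
have e5 : C1 = lc xs (fun i => (i == 4)%:R) by apply: (@lcX _ _ xs 4).
have e6 : C2 = lc xs (fun i => (i == 5)%:R) by apply: (@lcX _ _ xs 5).
have e7 : X1 = lc xs (fun i => (i == 6)%:R) by apply: (@lcX _ _ xs 6).
rewrite e1 e2 e3 e4 e5 e6 e7; lc_fold; lc_close.
Qed.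

Lemma Tv_lin3 a b c c' k f : Dp a -> Dp b -> Dp c -> Dp c' -> tril f ->
  Tv Q a b (k *: c + c') f = k *: Tv Q a b c f + Tv Q a b c' f.
Proof.
move=> ha hb hc hc' hf; rewrite /Tv /SW.
rewrite (evQ_lin2 Heps hQ k hb hc hc'); last exact: SW_bilD.
rewrite (evQ_lin1 Heps hQ k ha hc hc'); last by apply: SW_bilD => //; apply: tril_rot.
have -> : ev2 (Q a b) (fun x z => ev2 (Q (k *: c + c') x) (fun u v => rot2 f u v z)) =
   k *: ev2 (Q a b) (fun x z => ev2 (Q c x) (fun u v => rot2 f u v z)) +
   ev2 (Q a b) (fun x z => ev2 (Q c' x) (fun u v => rot2 f u v z)).
  rewrite -ev2_scale -ev2_add; apply: ev2_ext_in => p hp.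
  have [h1 h2] := Q_allD Heps U hQ ha hb hp.
  rewrite (evQ_lin1 Heps hQ k h1 hc hc') //.
  by apply: bil_bilD => //; apply: (tril_bil12 _ (tril_rot2 hf)).
set A1 := ev2 (Q b c) _; set A2 := ev2 (Q b c') _.
set B1 := ev2 (Q c a) _; set B2 := ev2 (Q c' a) _.
set C1 := ev2 (Q a b) (fun x z => ev2 (Q c x) _); set C2 := ev2 (Q a b) (fun x z => ev2 (Q c' x) _).
set xs := [:: A1; A2; B1; B2; C1; C2].
have e1 : A1 = lc xs (fun i => (i == 0)%:R) by apply: (@lcX _ _ xs 0).
have e2 : A2 = lc xs (fun i => (i == 1)%:R) by apply: (@lcX _ _ xs 1).
have e3 : B1 = lc xs (fun i => (i == 2)%:R) by apply: (@lcX _ _ xs 2).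
have e4 : B2 = lc xs (fun i => (i == 3)%:R) by apply: (@lcX _ _ xs 3).
have e5 : C1 = lc xs (fun i => (i == 4)%:R) by apply: (@lcX _ _ xs 4).
have e6 : C2 = lc xs (fun i => (i == 5)%:R) by apply: (@lcX _ _ xs 5).
rewrite e1 e2 e3 e4 e5 e6; lc_fold; lc_close.
Qed.

Lemma Tv_cyc a b c f : Tv Q a b c f = Tv Q c a b (rot2 f).
Proof. by rewrite /Tv addrC addrA. Qed.

End Tr.
Arguments lin_i {K R}.

End Tr_.
Import Tr_.

Module Fus_.
Set Implicit Arguments.
Unset Strict Implicit.
Unset Printing Implicit Defensive.
Import GRing.Theory.
Local Open Scope ring_scope.

Section Fus.
Variables (K : fieldType) (R : algType K) (eps : R).
Hypothesis Heps : eps * eps = eps.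
Local Notation Dp := (Dp eps).
Variables (inB : R -> Prop) (E1 E2 : R -> tens2 R).
Hypothesis hE1 : double_derivation Dp inB E1.
Hypothesis hE2 : double_derivation Dp inB E2.
#[local] Set Default Proof Using "All".

Local Notation F := (fus_bracket E1 E2).

Lemma ev2_trmul (U : lmodType K) (t : tens2 R) z (h : R -> R -> U) :
  ev2 (trmul t z) h = ev2 t (fun u v => h u (v * z)).
Proof. by rewrite /ev2 big_map. Qed.
Lemma ev2_tlmul (U : lmodType K) (t : tens2 R) z (h : R -> R -> U) :
  ev2 (tlmul z t) h = ev2 t (fun u v => h (z * u) v).
Proof. by rewrite /ev2 big_map. Qed.

Lemma ev2_allpairs (U : lmodType K) (s t : tens2 R) (h : R -> R -> U) :
  ev2 [seq (q.1 * p.2, p.1 * q.2) | p <- s, q <- t] h =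
  ev2 s (fun p1 p2 => ev2 t (fun q1 q2 => h (q1 * p2) (p1 * q2))).
Proof. by rewrite /ev2 big_allpairs_dep. Qed.

Lemma ev2_fus (U : lmodType K) x y (h : R -> R -> U) : bil h ->
  ev2 (F x y) h =
  - (2%:R^-1) *: ev2 (E1 x) (fun p1 p2 => ev2 (E2 y) (fun q1 q2 => h (q1 * p2) (p1 * q2))) +
  (2%:R^-1) *: ev2 (E2 x) (fun p1 p2 => ev2 (E1 y) (fun q1 q2 => h (q1 * p2) (p1 * q2))).
Proof. by move=> hb; rewrite /fus_bracket ev2_cat !ev2_tscale2 // !ev2_allpairs. Qed.

Lemma bil_inner (U : lmodType K) (t : tens2 R) (h : R -> R -> U) : bil h ->
  bil (fun p1 p2 => ev2 t (fun q1 q2 => h (q1 * p2) (p1 * q2))).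
Proof.
move=> hb; apply: (@bil_ev2 K R U t (fun p1 p2 q1 q2 => h (q1 * p2) (p1 * q2))) => u v.
apply: (@bil_map K R eps Heps U (fun a b => h b a) (fun x => x * v) (fun z => u * z)).
- exact: bil_flip.
- exact: (lin_mulr Heps v).
- exact: (lin_mull Heps u).
Qed.

Section Deriv.
Variable d : R -> tens2 R.
Hypothesis hd : double_derivation Dp inB d.

Lemma d_allD x : Dp x -> allD eps (d x).
Proof. by case: hd => hv _ _ _ hx p; apply: hv. Qed.

Lemma evd_lin (U : lmodType K) k x x' (H : R -> R -> U) : Dp x -> Dp x' -> bil H ->
  ev2 (d (k *: x + x')) H = k *: ev2 (d x) H + ev2 (d x') H.
Proof. by case: hd => _ hl _ _ hx hx' hb; rewrite (teq2_ev (hl k x x' hx hx')) // ev2_cat ev2_tscale2. Qed.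

Lemma evd_mul (U : lmodType K) x y (H : R -> R -> U) : Dp x -> Dp y -> bil H ->
  ev2 (d (x * y)) H = ev2 (d x) (fun u v => H u (v * y)) + ev2 (d y) (fun u v => H (x * u) v).
Proof. by case: hd => _ _ _ hm hx hy hb; rewrite (teq2_ev (hm x y hx hy)) // ev2_cat /ev2 !big_map. Qed.

Lemma evd_B (U : lmodType K) x (H : R -> R -> U) : Dp x -> inB x -> bil H -> ev2 (d x) H = 0.
Proof. by case: hd => _ _ hz _ hx hB hb; apply: tzero2_ev => //; apply: hz. Qed.
End Deriv.

Lemma bil_q (U : lmodType K) (h : R -> R -> U) p1 p2 : bil h -> bil (fun q1 q2 => h (q1 * p2) (p1 * q2)).
Proof.
move=> hb; apply: (@bil_map K R eps Heps U h (fun x => x * p2) (fun z => p1 * z)) => //.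
- exact: (lin_mulr Heps p2).
- exact: (lin_mull Heps p1).
Qed.

Lemma ev2_exch (U : lmodType K) (s t : tens2 R) (H : R -> R -> R -> R -> U) :
  ev2 s (fun p1 p2 => ev2 t (fun q1 q2 => H p1 p2 q1 q2)) =
  ev2 t (fun q1 q2 => ev2 s (fun p1 p2 => H p1 p2 q1 q2)).
Proof. by rewrite /ev2 exchange_big. Qed.

Lemma allD_allpairs (s t : tens2 R) : allD eps s -> allD eps t ->
  allD eps [seq (q.1 * p.2, p.1 * q.2) | p <- s, q <- t].
Proof.
move=> hs ht x /allpairsP [[p q] [/hs [h1 h2] /ht [h3 h4] ->]] /=.
by split; apply: D_mul.
Qed.

Lemma F_allD x y : Dp x -> Dp y -> allD eps (F x y).
Proof.
move=> hx hy; apply: (allD_cat Heps); apply: (allD_tscale2 Heps); apply: allD_allpairs;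
  by [apply: (d_allD hE1) | apply: (d_allD hE2)].
Qed.

Lemma ev2_fusD (U : lmodType K) x y (h : R -> R -> U) : Dp x -> Dp y -> bilD eps h ->
  ev2 (F x y) h =
  - (2%:R^-1) *: ev2 (E1 x) (fun p1 p2 => ev2 (E2 y) (fun q1 q2 => h (q1 * p2) (p1 * q2))) +
  (2%:R^-1) *: ev2 (E2 x) (fun p1 p2 => ev2 (E1 y) (fun q1 q2 => h (q1 * p2) (p1 * q2))).
Proof.
move=> hx hy hb; rewrite /fus_bracket ev2_cat !(ev2_tscale2D Heps) ?ev2_allpairs //;
  apply: allD_allpairs; by [apply: (d_allD hE1) | apply: (d_allD hE2)].
Qed.

Lemma F_db : double_bracket Dp inB F.
Proof.
split; first split.
- by move=> x y p hx hy hp; apply: (F_allD hx hy).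
- move=> k x x' y hx hx' hy; apply: ev_teq2 => U h hb.
  rewrite ev2_cat ev2_tscale2 // !ev2_fus //.
  rewrite (evd_lin hE1 k hx hx') ?(evd_lin hE2 k hx hx'); try by apply: bil_inner.
  set a1 := ev2 (E1 x) _; set a2 := ev2 (E1 x') _; set a3 := ev2 (E2 x) _; set a4 := ev2 (E2 x') _.
  set xs := [:: a1; a2; a3; a4].
  have e1 : a1 = lc xs (fun i => (i == 0)%:R) by apply: (@lcX _ _ xs 0).
  have e2 : a2 = lc xs (fun i => (i == 1)%:R) by apply: (@lcX _ _ xs 1).
  have e3 : a3 = lc xs (fun i => (i == 2)%:R) by apply: (@lcX _ _ xs 2).
  have e4 : a4 = lc xs (fun i => (i == 3)%:R) by apply: (@lcX _ _ xs 3).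
  rewrite e1 e2 e3 e4; lc_fold; lc_close.
- move=> k x y y' hx hy hy'; apply: ev_teq2 => U h hb.
  rewrite ev2_cat ev2_tscale2 // !ev2_fus //.
  have -> : ev2 (E1 x) (fun p1 p2 => ev2 (E2 (k *: y + y')) (fun q1 q2 => h (q1 * p2) (p1 * q2))) =
    k *: ev2 (E1 x) (fun p1 p2 => ev2 (E2 y) (fun q1 q2 => h (q1 * p2) (p1 * q2))) +
    ev2 (E1 x) (fun p1 p2 => ev2 (E2 y') (fun q1 q2 => h (q1 * p2) (p1 * q2))).
    rewrite -ev2_scale -ev2_add; apply: ev2_ext => p1 p2.
    by rewrite (evd_lin hE2 k hy hy') //; apply: bil_q.
  have -> : ev2 (E2 x) (fun p1 p2 => ev2 (E1 (k *: y + y')) (fun q1 q2 => h (q1 * p2) (p1 * q2))) =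
    k *: ev2 (E2 x) (fun p1 p2 => ev2 (E1 y) (fun q1 q2 => h (q1 * p2) (p1 * q2))) +
    ev2 (E2 x) (fun p1 p2 => ev2 (E1 y') (fun q1 q2 => h (q1 * p2) (p1 * q2))).
    rewrite -ev2_scale -ev2_add; apply: ev2_ext => p1 p2.
    by rewrite (evd_lin hE1 k hy hy') //; apply: bil_q.
  set a1 := ev2 (E1 x) (fun p1 p2 => ev2 (E2 y) _); set a2 := ev2 (E1 x) (fun p1 p2 => ev2 (E2 y') _).
  set a3 := ev2 (E2 x) (fun p1 p2 => ev2 (E1 y) _); set a4 := ev2 (E2 x) (fun p1 p2 => ev2 (E1 y') _).
  set xs := [:: a1; a2; a3; a4].
  have e1 : a1 = lc xs (fun i => (i == 0)%:R) by apply: (@lcX _ _ xs 0).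
  have e2 : a2 = lc xs (fun i => (i == 1)%:R) by apply: (@lcX _ _ xs 1).
  have e3 : a3 = lc xs (fun i => (i == 2)%:R) by apply: (@lcX _ _ xs 2).
  have e4 : a4 = lc xs (fun i => (i == 3)%:R) by apply: (@lcX _ _ xs 3).
  rewrite e1 e2 e3 e4; lc_fold; lc_close.
- move=> x y hx hy hB; apply: ev_tzero2 => U h hb; rewrite ev2_fus //.
  case: hB => hB.
    rewrite (evd_B hE1 hx hB); last by apply: bil_inner.
    rewrite (evd_B hE2 hx hB); last by apply: bil_inner.
    by rewrite !scaler0 addr0.
  have -> : ev2 (E1 x) (fun p1 p2 => ev2 (E2 y) (fun q1 q2 => h (q1 * p2) (p1 * q2))) = 0.
    rewrite -(ev2_zero U (E1 x)); apply: ev2_ext => p1 p2; rewrite (evd_B hE2 hy hB) //; exact: bil_q.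
  have -> : ev2 (E2 x) (fun p1 p2 => ev2 (E1 y) (fun q1 q2 => h (q1 * p2) (p1 * q2))) = 0.
    rewrite -(ev2_zero U (E2 x)); apply: ev2_ext => p1 p2; rewrite (evd_B hE1 hy hB) //; exact: bil_q.
  by rewrite !scaler0 addr0.
- move=> x y hx hy; apply: ev_teq2 => U h hb.
  rewrite ev2_tneg2 // ev2_tflip !ev2_fus //; last exact: bil_flip.
  rewrite [in RHS]ev2_exch [X in _ = - (_ + _ *: X)]ev2_exch /=.
  set a1 := ev2 (E1 x) _; set a2 := ev2 (E2 x) _.
  set xs := [:: a1; a2].
  have e1 : a1 = lc xs (fun i => (i == 0)%:R) by apply: (@lcX _ _ xs 0).
  have e2 : a2 = lc xs (fun i => (i == 1)%:R) by apply: (@lcX _ _ xs 1).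
  rewrite e1 e2; lc_fold; lc_close.
- move=> x y z hx hy hz; apply: ev_teq2 => U h hb.
  have b1 : bil (fun u v => h u (v * z)) := bil_map Heps hb (lin_id Heps) (lin_mulr Heps z).
  have b2 : bil (fun u v => h (y * u) v) := bil_map Heps hb (lin_mull Heps y) (lin_id Heps).
  rewrite ev2_cat ev2_trmul ev2_tlmul !ev2_fus //.
  have -> : ev2 (E1 x) (fun p1 p2 => ev2 (E2 (y * z)) (fun q1 q2 => h (q1 * p2) (p1 * q2))) =
    ev2 (E1 x) (fun p1 p2 => ev2 (E2 y) (fun q1 q2 => h (q1 * p2) (p1 * q2 * z))) +
    ev2 (E1 x) (fun p1 p2 => ev2 (E2 z) (fun q1 q2 => h (y * (q1 * p2)) (p1 * q2))).
    rewrite -ev2_add; apply: ev2_ext => p1 p2.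
    rewrite (evd_mul hE2 hy hz); last by apply: bil_q.
    by congr (_ + _); apply: ev2_ext => q1 q2; rewrite !mulrA.
  have -> : ev2 (E2 x) (fun p1 p2 => ev2 (E1 (y * z)) (fun q1 q2 => h (q1 * p2) (p1 * q2))) =
    ev2 (E2 x) (fun p1 p2 => ev2 (E1 y) (fun q1 q2 => h (q1 * p2) (p1 * q2 * z))) +
    ev2 (E2 x) (fun p1 p2 => ev2 (E1 z) (fun q1 q2 => h (y * (q1 * p2)) (p1 * q2))).
    rewrite -ev2_add; apply: ev2_ext => p1 p2.
    rewrite (evd_mul hE1 hy hz); last by apply: bil_q.
    by congr (_ + _); apply: ev2_ext => q1 q2; rewrite !mulrA.
  set a1 := ev2 (E1 x) (fun p1 p2 => ev2 (E2 y) _); set a2 := ev2 (E1 x) (fun p1 p2 => ev2 (E2 z) _).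
  set a3 := ev2 (E2 x) (fun p1 p2 => ev2 (E1 y) _); set a4 := ev2 (E2 x) (fun p1 p2 => ev2 (E1 z) _).
  set xs := [:: a1; a2; a3; a4].
  have e1 : a1 = lc xs (fun i => (i == 0)%:R) by apply: (@lcX _ _ xs 0).
  have e2 : a2 = lc xs (fun i => (i == 1)%:R) by apply: (@lcX _ _ xs 1).
  have e3 : a3 = lc xs (fun i => (i == 2)%:R) by apply: (@lcX _ _ xs 2).
  have e4 : a4 = lc xs (fun i => (i == 3)%:R) by apply: (@lcX _ _ xs 3).
  rewrite e1 e2 e3 e4; lc_fold; lc_close.
Qed.

End Fus.

Section Add.
Variables (K : fieldType) (R : algType K) (Dq inB : R -> Prop) (Q1 Q2 : R -> R -> tens2 R).
Hypothesis h1 : double_bracket Dq inB Q1.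
Hypothesis h2 : double_bracket Dq inB Q2.

Lemma add_db : double_bracket Dq inB (bracket_add Q1 Q2).
Proof.
case: h1 => [[v1 l11 l12 z1 s1] m1]; case: h2 => [[v2 l21 l22 z2 s2] m2].
rewrite /bracket_add; split; first split.
- by move=> x y p hx hy; rewrite mem_cat => /orP[/v1|/v2]; apply.
- move=> k x x' y hx hx' hy; apply: ev_teq2 => U h hb.
  rewrite !ev2_cat ev2_tscale2 // ev2_cat (teq2_ev (l11 k x x' y hx hx' hy)) //.
  rewrite (teq2_ev (l21 k x x' y hx hx' hy)) // !ev2_cat !ev2_tscale2 //.
  by rewrite scalerDr !addrA; congr (_ + _); rewrite -!addrA; congr (_ + _); rewrite addrC.
- move=> k x y y' hx hy hy'; apply: ev_teq2 => U h hb.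
  rewrite !ev2_cat ev2_tscale2 // ev2_cat (teq2_ev (l12 k x y y' hx hy hy')) //.
  rewrite (teq2_ev (l22 k x y y' hx hy hy')) // !ev2_cat !ev2_tscale2 //.
  by rewrite scalerDr !addrA; congr (_ + _); rewrite -!addrA; congr (_ + _); rewrite addrC.
- move=> x y hx hy hB; apply: ev_tzero2 => U h hb.
  by rewrite ev2_cat (tzero2_ev (z1 x y hx hy hB)) // (tzero2_ev (z2 x y hx hy hB)) // addr0.
- move=> x y hx hy; apply: ev_teq2 => U h hb.
  rewrite ev2_cat (teq2_ev (s1 x y hx hy)) // (teq2_ev (s2 x y hx hy)) //.
  by rewrite /tflip /tneg2 !map_cat ev2_cat.
- move=> x y z hx hy hz; apply: ev_teq2 => U h hb.
  rewrite ev2_cat (teq2_ev (m1 x y z hx hy hz)) // (teq2_ev (m2 x y z hx hy hz)) //.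
  rewrite /trmul /tlmul !map_cat !ev2_cat.
  by rewrite !addrA; congr (_ + _); rewrite -!addrA; congr (_ + _); rewrite addrC.
Qed.
End Add.

End Fus_.
Import Fus_.

Module Main_.
Set Implicit Arguments.
Unset Strict Implicit.
Unset Printing Implicit Defensive.
Import GRing.Theory.
Local Open Scope ring_scope.

Lemma corner4_gen (R : pzRingType) (E a b l r u v : R) : E * E + a * b = 1 ->
  l * (u * v) * r = (l * u * E) * (E * v * r) + (l * u * a) * (b * v * r).
Proof. by move=> one; rewrite -{1}[u]mulr1 -one !(mulrDr, mulrDl) !mulrA. Qed.

Section Main.
Variables (K : fieldType) (A : algType K) (N : nat) (e : nat -> A).
Hypothesis hN : (2 <= N)%N.
Hypothesis he : idempotent_system N e.
Variables (Abar : algType K) (iota : A -> Abar) (g12 g21 : Abar).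
Hypothesis hfus : is_fusion_product (e 1%N) (e 2%N) iota g12 g21.
#[local] Set Default Proof Using "All".

Local Notation eps := (epsf e iota).
Local Notation f1 := (iota (e 1%N)).
Local Notation Dp := (Br_.Dp eps).
Local Notation ep := (eplus e iota g12).
Local Notation em := (eminus e iota g21).
Local Notation gn := (gen e iota g12 g21).

Lemma e_mul s t : (1 <= s <= N)%N -> (1 <= t <= N)%N -> e s * e t = if s == t then e s else 0.
Proof. by case: he => _ hm _; apply: hm. Qed.
Lemma e11 : e 1 * e 1 = e 1. Proof. by rewrite e_mul //; apply/andP; split => //; apply: leq_trans hN. Qed.
Lemma e22 : e 2 * e 2 = e 2. Proof. by rewrite e_mul //; apply/andP; split. Qed.
Lemma e12 : e 1 * e 2 = 0. Proof. by rewrite e_mul //; apply/andP; split => //; apply: leq_trans hN. Qed.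
Lemma e21 : e 2 * e 1 = 0. Proof. by rewrite e_mul //; apply/andP; split => //; apply: leq_trans hN. Qed.

Lemma ihom : alg_hom iota. Proof. by case: hfus. Qed.
Lemma iM x y : iota (x * y) = iota x * iota y. Proof. by case: ihom => _ h _. Qed.
Lemma i1 : iota 1 = 1. Proof. by case: ihom. Qed.
Lemma iL k x y : iota (k *: x + y) = k *: iota x + iota y. Proof. by case: ihom. Qed.
Lemma i0 : iota 0 = 0.
Proof.
have := iL 1 0 0; rewrite !scale1r !addr0 => h.
by apply: (addrI (iota 0)); rewrite addr0 -h.
Qed.
Lemma iD x y : iota (x + y) = iota x + iota y. Proof. by rewrite -{1}[x]scale1r iL scale1r. Qed.
Lemma iZ k x : iota (k *: x) = k *: iota x. Proof. by rewrite -[k *: x]addr0 iL i0 addr0. Qed.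
Lemma iN x : iota (- x) = - iota x. Proof. by rewrite -scaleN1r iZ scaleN1r. Qed.
Lemma iB x y : iota (x - y) = iota x - iota y. Proof. by rewrite iD iN. Qed.

Lemma mu : matrix_units f1 g12 g21 (iota (e 2)). Proof. by case: hfus. Qed.
Definition o0 : 'I_2 := @Ordinal 2 0 isT.
Definition o1 : 'I_2 := @Ordinal 2 1 isT.
Lemma m11_12 : f1 * g12 = g12. Proof. exact: (mu o0 o0 o0 o1). Qed.
Lemma m12_22 : g12 * iota (e 2) = g12. Proof. exact: (mu o0 o1 o1 o1). Qed.
Lemma m12_21 : g12 * g21 = f1. Proof. exact: (mu o0 o1 o1 o0). Qed.
Lemma m21_12 : g21 * g12 = iota (e 2). Proof. exact: (mu o1 o0 o0 o1). Qed.
Lemma m21_11 : g21 * f1 = g21. Proof. exact: (mu o1 o0 o0 o0). Qed.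
Lemma m22_21 : iota (e 2) * g21 = g21. Proof. exact: (mu o1 o1 o1 o0). Qed.
Lemma m22_12 : iota (e 2) * g12 = 0. Proof. exact: (mu o1 o1 o0 o1). Qed.
Lemma m12_11 : g12 * f1 = 0. Proof. exact: (mu o0 o1 o0 o0). Qed.
Lemma m11_21 : f1 * g21 = 0. Proof. exact: (mu o0 o0 o1 o0). Qed.
Lemma m21_22 : g21 * iota (e 2) = 0. Proof. exact: (mu o1 o0 o1 o1). Qed.
Lemma m12_12 : g12 * g12 = 0. Proof. exact: (mu o0 o1 o0 o1). Qed.
Lemma m21_21 : g21 * g21 = 0. Proof. exact: (mu o1 o0 o1 o0). Qed.

Lemma epsE : eps = 1 - iota (e 2). Proof. by []. Qed.
Lemma eps_iota : eps = iota (1 - e 2). Proof. by rewrite iB i1. Qed.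
Lemma Heps : eps * eps = eps.
Proof. by rewrite eps_iota -iM mulrBr mulr1 mulrBl mul1r e22 subrr subr0. Qed.
Lemma eps12 : eps * g12 = g12. Proof. by rewrite epsE mulrBl mul1r m22_12 subr0. Qed.
Lemma g12eps : g12 * eps = 0. Proof. by rewrite epsE mulrBr mulr1 m12_22 subrr. Qed.
Lemma eps21 : eps * g21 = 0. Proof. by rewrite epsE mulrBl mul1r m22_21 subrr. Qed.
Lemma g21eps : g21 * eps = g21. Proof. by rewrite epsE mulrBr mulr1 m21_22 subr0. Qed.
Lemma epsf1 : eps * f1 = f1. Proof. by rewrite eps_iota -iM mulrBl mul1r e21 subr0. Qed.
Lemma f1eps : f1 * eps = f1. Proof. by rewrite eps_iota -iM mulrBr mulr1 e12 subr0. Qed.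
Lemma f1f1 : f1 * f1 = f1. Proof. by rewrite -iM e11. Qed.
Lemma f1f1' x : x * f1 * f1 = x * f1. Proof. by rewrite -mulrA f1f1. Qed.
Lemma Df1 : Dp f1. Proof. by rewrite /Br_.Dp epsf1 f1eps. Qed.

Lemma eplusE sp : ep sp = ep sp * iota (idemL e sp).
Proof. by case: sp => /=; rewrite ?m12_22 // -eps_iota Heps. Qed.
Lemma eminusE sm : em sm = iota (idemR e sm) * em sm.
Proof. by case: sm => /=; rewrite ?m22_21 // -eps_iota Heps. Qed.
Lemma idemL2 sp : idemL e sp * idemL e sp = idemL e sp.
Proof. by case: sp => /=; rewrite ?e22 // mulrBr mulr1 mulrBl mul1r e22 subrr subr0. Qed.
Lemma idemR2 sm : idemR e sm * idemR e sm = idemR e sm.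
Proof. by case: sm => /=; rewrite ?e22 // mulrBr mulr1 mulrBl mul1r e22 subrr subr0. Qed.

Lemma gen_norm sp sm x :
  ep sp * iota x * em sm =
  gn sp sm (idemL e sp * x * idemR e sm).
Proof. by rewrite /gen !iM {1}eplusE {1}eminusE !mulrA. Qed.
Lemma corner_norm sp sm x : corner e sp sm (idemL e sp * x * idemR e sm).
Proof. by rewrite /corner !mulrA idemL2 -!mulrA idemR2. Qed.

Lemma eps_plus sp : eps * ep sp = ep sp.
Proof. by case: sp => /=; rewrite ?eps12 ?Heps. Qed.
Lemma minus_eps sm : em sm * eps = em sm.
Proof. by case: sm => /=; rewrite ?g21eps ?Heps. Qed.
Lemma gen_D sp sm x : Dp (gn sp sm x).
Proof. by rewrite /Br_.Dp /gen !mulrA eps_plus -!mulrA minus_eps. Qed.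
Lemma gen_r sp x : gn sp true x * f1 = gn sp true x.
Proof. by rewrite /gen /= -mulrA m21_11. Qed.
Lemma gen_l sm x : f1 * gn true sm x = gn true sm x.
Proof. by rewrite /gen /= !mulrA m11_12. Qed.

Lemma inBf_f1 : inBf N e iota f1.
Proof.
exists (fun s => if s == 1%N then 1 else 0); rewrite /= scale1r big1_seq ?addr0 //.
move=> s /andP[_]; rewrite mem_index_iota => /andP[h _]; case: eqP => [hs|]; last by rewrite scale0r.
by move: h; rewrite hs.
Qed.

Inductive Sp : Abar -> Prop :=
| Sp_gen sp sm x : corner e sp sm x -> Sp (gn sp sm x)
| Sp_lin (k : K) u v : Sp u -> Sp v -> Sp (k *: u + v)
| Sp_mul u v : Sp u -> Sp v -> Sp (u * v).

Lemma Sp_D u : Sp u -> Dp u.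
Proof.
elim=> [sp sm x _ | k u' v _ hu _ hv | u' v _ hu _ hv]; first exact: gen_D.
- exact: D_lin Heps k u' v hu hv.
- exact: D_mul Heps u' v hu hv.
Qed.

Lemma Sp_add u v : Sp u -> Sp v -> Sp (u + v).
Proof. by move=> hu hv; have := Sp_lin 1 hu hv; rewrite scale1r. Qed.

Lemma Sp_norm sp sm a : Sp (ep sp * iota a * em sm).
Proof. by rewrite gen_norm; apply: Sp_gen; apply: corner_norm. Qed.

Lemma Sp0 : Sp 0.
Proof. by have := Sp_norm false false 0; rewrite i0 mulr0 mul0r. Qed.
Lemma Spf1 : Sp f1.
Proof. by move: (Sp_norm false false (e 1)) => /=; rewrite (Df1 : eps * f1 * eps = f1). Qed.

Definition Good u := [/\ Sp (eps * u * eps), Sp (eps * u * g21), Sp (g12 * u * eps) & Sp (g12 * u * g21)].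

Lemma corner4 (l r u v : Abar) : l * (u * v) * r = (l * u * eps) * (eps * v * r) + (l * u * g21) * (g12 * v * r).
Proof.
apply: corner4_gen; by rewrite Heps m21_12 epsE subrK.
Qed.

Lemma lr_lin (l r : Abar) (k : K) (u v : Abar) : l * (k *: u + v) * r = k *: (l * u * r) + l * v * r.
Proof. by rewrite mulrDr mulrDl -scalerAr -scalerAl. Qed.

Lemma Dp_Sp u : Dp u -> Sp u.
Proof.
move=> hu; suff : Good u by case; rewrite hu.
apply: (gen_all hfus (G := Good)).
- have : Good (iota 1).
    by split; [apply: (Sp_norm false false) | apply: (Sp_norm false true) | apply: (Sp_norm true false) | apply: (Sp_norm true true)].
  by rewrite i1.
- move=> k x y [a1 a2 a3 a4] [b1 b2 b3 b4]; split; rewrite lr_lin; by apply: Sp_lin.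
- move=> x y [a1 a2 a3 a4] [b1 b2 b3 b4]; split; rewrite corner4; by apply: Sp_add; apply: Sp_mul.
- by move=> a; split; [apply: (Sp_norm false false) | apply: (Sp_norm false true) | apply: (Sp_norm true false) | apply: (Sp_norm true true)].
- split.
  + by rewrite eps12 g12eps; apply: Sp0.
  + by rewrite eps12 m12_21; apply: Spf1.
  + by rewrite m12_12 mul0r; apply: Sp0.
  + by rewrite m12_12 mul0r; apply: Sp0.
- split.
  + by rewrite eps21 mul0r; apply: Sp0.
  + by rewrite eps21 mul0r; apply: Sp0.
  + by rewrite m12_21 f1eps; apply: Spf1.
  + by rewrite m12_21 m11_21; apply: Sp0.
Qed.

Lemma nb (b : bool) : ((~~ b)%:R : K) = 1 - b%:R.
Proof. by case: b => /=; rewrite ?subrr ?subr0. Qed.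

Section Brk.
Variables (br : A -> A -> tens2 A) (ind : Abar -> Abar -> tens2 Abar).
Hypothesis hind : double_bracket (inAf e iota) (inBf N e iota) ind.
Hypothesis hindgen : ind_on_generators e iota g12 g21 br ind.
Variables (E1 E2 : Abar -> tens2 Abar).
Hypothesis hE1 : double_derivation (inAf e iota) (inBf N e iota) E1.
Hypothesis hE1gen : TrE1_on_generators e iota g12 g21 E1.
Hypothesis hE2 : double_derivation (inAf e iota) (inBf N e iota) E2.
Hypothesis hE2gen : TrE2_on_generators e iota g12 g21 E2.

Lemma hE1' : double_derivation Dp (inBf N e iota) E1. Proof. exact: hE1. Qed.
Lemma hE2' : double_derivation Dp (inBf N e iota) E2. Proof. exact: hE2. Qed.
Lemma hind' : double_bracket Dp (inBf N e iota) ind. Proof. exact: hind. Qed.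

Lemma Dgf sp sm x : Dp (gn sp sm x * f1). Proof. by apply: D_mul; [apply: Heps|apply: gen_D|apply: Df1]. Qed.
Lemma Dfg sp sm x : Dp (f1 * gn sp sm x). Proof. by apply: D_mul; [apply: Heps|apply: Df1|apply: gen_D]. Qed.
Lemma Dnf : Dp (- f1). Proof. by apply: D_opp; [apply: Heps|apply: Df1]. Qed.

Lemma evE1 (U : lmodType K) sp sm x (h : Abar -> Abar -> U) : corner e sp sm x -> bilD eps h ->
  ev2 (E1 (gn sp sm x)) h = (~~ sm)%:R *: h (gn sp sm x * f1) f1 - (~~ sp)%:R *: h f1 (f1 * gn sp sm x).
Proof.
move=> hc hb; move: (hE1gen hc) => /= H.
rewrite (teq2_evD Heps H) //; first last.
- case: sp sm {hc H} => [] [] p; rewrite ?inE => /=; try by [];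
   (repeat case/orP); move/eqP => -> /=; split; by [apply: Dgf|apply: Dfg|apply: Df1|apply: Dnf].
- by apply: (d_allD Heps hE1' hE2' hE1'); apply: gen_D.
case: sp sm {hc H} => [] []; rewrite ?ev2_cons ?ev2_nil /=;
  rewrite ?(bilDNl Heps hb Df1 (Dfg _ _ _)) ?scale1r ?scale0r ?subr0 ?sub0r ?addr0 //.
Qed.

Lemma evE2 (U : lmodType K) sp sm x (h : Abar -> Abar -> U) : corner e sp sm x -> bilD eps h ->
  ev2 (E2 (gn sp sm x)) h = sm%:R *: h (gn sp sm x * f1) f1 - sp%:R *: h f1 (f1 * gn sp sm x).
Proof.
move=> hc hb; move: (hE2gen hc) => /= H.
rewrite (teq2_evD Heps H) //; first last.
- case: sp sm {hc H} => [] [] p; rewrite ?inE => /=; try by [];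
   (repeat case/orP); move/eqP => -> /=; split; by [apply: Dgf|apply: Dfg|apply: Df1|apply: Dnf|apply: gen_D].
- by apply: (d_allD Heps hE1' hE2' hE2'); apply: gen_D.
case: sp sm {hc H} => [] []; rewrite ?ev2_cons ?ev2_nil /= ?gen_l ?gen_r;
  rewrite ?(bilDNl Heps hb Df1 (Dfg _ _ _)) ?(bilDNl Heps hb Df1 (gen_D _ _ _)) ?scale1r ?scale0r ?subr0 ?sub0r ?addr0 //.
Qed.

Local Notation F := (fus_bracket E1 E2).

Lemma bilD_pq (U : lmodType K) (h : Abar -> Abar -> U) p1 p2 : bilD eps h -> Dp p1 -> Dp p2 ->
  bilD eps (fun q1 q2 => h (q1 * p2) (p1 * q2)).
Proof.
move=> hb h1 h2; apply: (bilD_map Heps (h := h) (f := fun q => q * p2) (g := fun q => p1 * q)) => //.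
- exact: (lin_mulr Heps p2).
- exact: (lin_mull Heps p1).
- by move=> z hz; apply: D_mul => //; apply: Heps.
- by move=> z hz; apply: D_mul => //; apply: Heps.
Qed.

Lemma bilD_qp (U : lmodType K) (h : Abar -> Abar -> U) a b : bilD eps h -> Dp a -> Dp b ->
  bilD eps (fun p1 p2 => h (a * p2) (p1 * b)).
Proof.
move=> hb h1 h2; apply: (bilD_map Heps (h := fun u v => h v u) (f := fun q => q * b) (g := fun q => a * q)) => //.
- by apply: (bilD_flip Heps).
- exact: (lin_mulr Heps b).
- exact: (lin_mull Heps a).
- by move=> z hz; apply: D_mul => //; apply: Heps.
- by move=> z hz; apply: D_mul => //; apply: Heps.
Qed.

Lemma FusF (U : lmodType K) sp sm x tp tm y (h : Abar -> Abar -> U) :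
  corner e sp sm x -> corner e tp tm y -> bilD eps h ->
  ev2 (F (gn sp sm x) (gn tp tm y)) h =
  2%:R^-1 *: ((sm%:R - tm%:R) *: h (gn tp tm y * f1) (gn sp sm x * f1)
            + (tp%:R - sm%:R) *: h f1 (gn sp sm x * f1 * gn tp tm y)
            + (tm%:R - sp%:R) *: h (gn tp tm y * f1 * gn sp sm x) f1
            + (sp%:R - tp%:R) *: h (f1 * gn sp sm x) (f1 * gn tp tm y)).
Proof.
move=> hx hy hb.
set X := gn sp sm x; set Y := gn tp tm y.
have DX : Dp X by apply: gen_D.
have DY : Dp Y by apply: gen_D.
rewrite (ev2_fusD Heps hE1' hE2') //.
have -> : ev2 (E1 X) (fun p1 p2 => ev2 (E2 Y) (fun q1 q2 => h (q1 * p2) (p1 * q2))) =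
  ev2 (E1 X) (fun p1 p2 => tm%:R *: h (Y * f1 * p2) (p1 * f1) - tp%:R *: h (f1 * p2) (p1 * (f1 * Y))).
  apply: ev2_ext_in => p hp; have [h1 h2] := d_allD Heps hE1' hE2' hE1' DX hp.
  by rewrite (evE2 hy) //; apply: bilD_pq.
have -> : ev2 (E2 X) (fun p1 p2 => ev2 (E1 Y) (fun q1 q2 => h (q1 * p2) (p1 * q2))) =
  ev2 (E2 X) (fun p1 p2 => (~~ tm)%:R *: h (Y * f1 * p2) (p1 * f1) - (~~ tp)%:R *: h (f1 * p2) (p1 * (f1 * Y))).
  apply: ev2_ext_in => p hp; have [h1 h2] := d_allD Heps hE1' hE2' hE2' DX hp.
  by rewrite (evE1 hy) //; apply: bilD_pq.
have DYf : Dp (Y * f1) by apply: D_mul => //; [apply: Heps | apply: Df1].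
have DfY : Dp (f1 * Y) by apply: D_mul => //; [apply: Heps | apply: Df1].
have bG : forall c1 c2 : K, bilD eps (fun p1 p2 => c1 *: h (Y * f1 * p2) (p1 * f1) - c2 *: h (f1 * p2) (p1 * (f1 * Y))).
  move=> c1 c2; apply: (bilD_sub Heps); apply: (bilD_scale Heps); apply: bilD_qp => //; exact: Df1.
rewrite (evE1 hx) // (evE2 hx) //.
rewrite /X /Y.
move: (gn sp sm x) (gn tp tm y) => X0 Y0.
rewrite !mulrA !f1f1' !f1f1.
set a1 := h (Y0 * f1) (X0 * f1); set a2 := h f1 (X0 * f1 * Y0);
set a3 := h (Y0 * f1 * X0) f1; set a4 := h (f1 * X0) (f1 * Y0).
set xs := [:: a1; a2; a3; a4].
have e1 : a1 = lc xs (fun i => (i == 0)%:R) by apply: (@lcX _ _ xs 0).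
have e2 : a2 = lc xs (fun i => (i == 1)%:R) by apply: (@lcX _ _ xs 1).
have e3 : a3 = lc xs (fun i => (i == 2)%:R) by apply: (@lcX _ _ xs 2).
have e4 : a4 = lc xs (fun i => (i == 3)%:R) by apply: (@lcX _ _ xs 3).
rewrite e1 e2 e3 e4; lc_fold; rewrite !nb; lc_close.
Qed.

Lemma Fdb : double_bracket Dp (inBf N e iota) F.
Proof. exact: (F_db Heps hE1' hE2'). Qed.

Lemma Pf1 (U : lmodType K) a (H : Abar -> Abar -> U) : Dp a -> bil H -> ev2 (ind a f1) H = 0.
Proof.
move=> ha hb; apply: (evQ_B Heps hind' ha Df1); [by right; apply: inBf_f1 | exact: (bil_bilD Heps hb)].
Qed.

Lemma Pmul (U : lmodType K) a x y (H : Abar -> Abar -> U) : Dp a -> Dp x -> Dp y -> bil H ->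
  ev2 (ind a (x * y)) H = ev2 (ind a x) (fun u v => H u (v * y)) + ev2 (ind a y) (fun u v => H (x * u) v).
Proof. by move=> ha hx hy hb; apply: (evQ_mul2 Heps hind' ha hx hy); apply: (bil_bilD Heps hb). Qed.

Lemma Prf1 (U : lmodType K) a c (H : Abar -> Abar -> U) : Dp a -> Dp c -> bil H ->
  ev2 (ind a (c * f1)) H = ev2 (ind a c) (fun u v => H u (v * f1)).
Proof.
move=> ha hc hb; rewrite Pmul //; last exact: Df1.
by rewrite Pf1 ?addr0 //; exact: (bilg_map hb (lin_ml c) lin_i).
Qed.

Lemma Plf1 (U : lmodType K) a b (H : Abar -> Abar -> U) : Dp a -> Dp b -> bil H ->
  ev2 (ind a (f1 * b)) H = ev2 (ind a b) (fun u v => H (f1 * u) v).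
Proof.
move=> ha hb hH; rewrite Pmul //; last exact: Df1.
by rewrite Pf1 ?add0r //; exact: (bilg_map hH lin_i (lin_mr b)).
Qed.

Definition Abpart (U : lmodType K) (a b c : Abar) (tp up um : bool) (f : Abar -> Abar -> Abar -> U) : U :=
  2%:R^-1 *: ev2 (ind a b) (fun w v => (um%:R - tp%:R) *: f (c * f1 * w) v f1 + (tp%:R - up%:R) *: f (f1 * w) v (f1 * c)).
Definition Acpart (U : lmodType K) (a b c : Abar) (tm tp um : bool) (f : Abar -> Abar -> Abar -> U) : U :=
  2%:R^-1 *: ev2 (ind a c) (fun w v => (tm%:R - um%:R) *: f w (v * f1) (b * f1) + (um%:R - tp%:R) *: f w (v * f1 * b) f1).

Lemma Asplit (U : lmodType K) sp sm x tp tm y up um z (f : Abar -> Abar -> Abar -> U) :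
  corner e sp sm x -> corner e tp tm y -> corner e up um z -> tril f ->
  SW ind (gn sp sm x) (F (gn tp tm y) (gn up um z)) f =
  Abpart (gn sp sm x) (gn tp tm y) (gn up um z) tp up um f +
  Acpart (gn sp sm x) (gn tp tm y) (gn up um z) tm tp um f.
Proof.
move=> hx hy hz hf.
have Da := gen_D sp sm x; have Db := gen_D tp tm y; have Dc := gen_D up um z.
rewrite /SW (FusF hy hz); last by apply: (SW_bilD Heps hind') => //.
move: Da Db Dc; set a := gn sp sm x; set b := gn tp tm y; set c := gn up um z => Da Db Dc.
have Dcf : Dp (c * f1) by apply: D_mul => //; [apply: Heps | apply: Df1].
have hb3 : forall w, bil (fun u v => f u v w) by move=> w; apply: tril_bil12.
rewrite (Prf1 Da Dc (hb3 _)) (Pf1 Da (hb3 _)) (Pmul Da Dcf Db (hb3 _)).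
have bb : bil (fun u v => f u (v * b) f1) := bil_f12 f1 hf lin_i (lin_mr b).
rewrite (Prf1 Da Dc bb) (Plf1 Da Db (hb3 _)).
rewrite /Abpart /Acpart !ev2_add !ev2_scale.
set A1 := ev2 (ind a c) (fun u v => f u (v * f1) (b * f1)).
set A2 := ev2 (ind a c) (fun u v => f u (v * f1 * b) f1).
set B1 := ev2 (ind a b) (fun u v => f (c * f1 * u) v f1).
set B2 := ev2 (ind a b) (fun u v => f (f1 * u) v (f1 * c)).
set xs := [:: A1; A2; B1; B2].
have e1 : A1 = lc xs (fun i => (i == 0)%:R) by apply: (@lcX _ _ xs 0).
have e2 : A2 = lc xs (fun i => (i == 1)%:R) by apply: (@lcX _ _ xs 1).
have e3 : B1 = lc xs (fun i => (i == 2)%:R) by apply: (@lcX _ _ xs 2).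
have e4 : B2 = lc xs (fun i => (i == 3)%:R) by apply: (@lcX _ _ xs 3).
rewrite ?scaler0 ?addr0 e1 e2 e3 e4; lc_fold; lc_close.
Qed.

Lemma Bform (U : lmodType K) sp sm x tp tm y up um z (f : Abar -> Abar -> Abar -> U) :
  corner e sp sm x -> corner e tp tm y -> corner e up um z -> tril f ->
  SW F (gn up um z) (ind (gn sp sm x) (gn tp tm y)) (rot2 f) =
  ev2 (ind (gn sp sm x) (gn tp tm y)) (fun w v => 2%:R^-1 *:
     ((um%:R - sm%:R) *: f (gn up um z * f1) v (w * f1)
    + (tp%:R - um%:R) *: f (gn up um z * f1 * w) v f1
    + (sm%:R - up%:R) *: f f1 v (w * f1 * gn up um z)
    + (up%:R - tp%:R) *: f (f1 * w) v (f1 * gn up um z))).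
Proof.
move=> hx hy hz hf.
have Da := gen_D sp sm x; have Db := gen_D tp tm y; have Dc := gen_D up um z.
have HG := SW_bilD Heps Fdb Dc (tril_rot2 hf).
set c := gn up um z.
have HH : bil (fun w v => 2%:R^-1 *:
     ((um%:R - sm%:R) *: f (c * f1) v (w * f1)
    + (tp%:R - um%:R) *: f (c * f1 * w) v f1
    + (sm%:R - up%:R) *: f f1 v (w * f1 * c)
    + (up%:R - tp%:R) *: f (f1 * w) v (f1 * c))).
  apply: bilg_scale; apply: bilg_add; [apply: bilg_add; [apply: bilg_add|]|]; apply: bilg_scale.
  - exact: (bil_f32 (c * f1) hf (lin_mr f1) lin_i).
  - exact: (bil_f12 f1 hf (lin_ml (c * f1)) lin_i).
  - exact: (bil_f32 f1 hf (lin_c (lin_mr c) (lin_mr f1)) lin_i).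
  - exact: (bil_f12 (f1 * c) hf (lin_ml f1) lin_i).
have hL := hindgen hx hy.
have LD : allD eps [seq (ep tp * iota p.1 * em sm, ep sp * iota p.2 * em tm) | p <- br x y].
  by move=> q /mapP [p _ ->] /=; rewrite !gen_norm; split; apply: gen_D.
rewrite /SW (teq2_evD Heps hL) //; last exact: (Q_allD Heps U hind' Da Db).
rewrite [RHS](teq2_evD Heps hL) //; [|exact: (Q_allD Heps U hind' Da Db)|exact: (bil_bilD Heps HH)].
apply: ev2_ext_in => q /mapP [p _ ->] /=.
rewrite !gen_norm (FusF hz (corner_norm _ _ _)) //.
apply: (bil_bilD Heps); exact: (bil_flip (tril_bil13 _ hf)).
Qed.

Lemma FamZ (U : lmodType K) sp sm x tp tm y up um z (f : Abar -> Abar -> Abar -> U) :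
  corner e sp sm x -> corner e tp tm y -> corner e up um z -> tril f ->
  Abpart (gn sp sm x) (gn tp tm y) (gn up um z) tp up um f +
  Acpart (gn tp tm y) (gn up um z) (gn sp sm x) um up sm (rot f) +
  SW F (gn up um z) (ind (gn sp sm x) (gn tp tm y)) (rot2 f) = 0.
Proof.
move=> hx hy hz hf.
have Da := gen_D sp sm x; have Db := gen_D tp tm y; have Dc := gen_D up um z.
rewrite (Bform hx hy hz hf) /Abpart /Acpart.
rewrite (evQ_skew Heps hind' Db Da); last first.
  apply: (bil_bilD Heps); apply: bilg_add; apply: bilg_scale; rewrite /rot.
  - exact: (bil_f23 (gn up um z * f1) hf lin_i (lin_mr f1)).
  - exact: (bil_f23 f1 hf lin_i (lin_c (lin_mr (gn up um z)) (lin_mr f1))).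
move: Da Db Dc; set a := gn sp sm x; set b := gn tp tm y; set c := gn up um z => Da Db Dc.
rewrite /rot -!ev2_scale -ev2_opp -ev2_scale -!ev2_add -(ev2_zero U (ind a b)).
apply: ev2_ext => w v.
set A1 := f (c * f1 * w) v f1; set A2 := f (f1 * w) v (f1 * c).
set A3 := f (c * f1) v (w * f1); set A4 := f f1 v (w * f1 * c).
set xs := [:: A1; A2; A3; A4].
have e1 : A1 = lc xs (fun i => (i == 0)%:R) by apply: (@lcX _ _ xs 0).
have e2 : A2 = lc xs (fun i => (i == 1)%:R) by apply: (@lcX _ _ xs 1).
have e3 : A3 = lc xs (fun i => (i == 2)%:R) by apply: (@lcX _ _ xs 2).
have e4 : A4 = lc xs (fun i => (i == 3)%:R) by apply: (@lcX _ _ xs 3).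
rewrite e1 e2 e3 e4 (lc0 xs); lc_fold; lc_close.
Qed.

Local Notation Mx a b c f := (ev3 (kappa ind F a b c) f).

Lemma addb : double_bracket Dp (inBf N e iota) (bracket_add ind F).
Proof. exact: (add_db hind' Fdb). Qed.

Lemma kappa_Tv (U : lmodType K) a b c (f : Abar -> Abar -> Abar -> U) : tril f ->
  Mx a b c f = Tv (bracket_add ind F) a b c f - Tv ind a b c f - Tv F a b c f.
Proof. by move=> hf; rewrite /kappa ev3_kgen // !ev3_triple. Qed.

Ltac lc6 A1 A2 A3 A4 A5 A6 :=
  let xs := fresh "xs" in
  set xs := [:: A1; A2; A3; A4; A5; A6];
  (have -> : A1 = lc xs (fun i => (i == 0)%:R) by apply: (@lcX _ _ xs 0));
  (have -> : A2 = lc xs (fun i => (i == 1)%:R) by apply: (@lcX _ _ xs 1));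
  (have -> : A3 = lc xs (fun i => (i == 2)%:R) by apply: (@lcX _ _ xs 2));
  (have -> : A4 = lc xs (fun i => (i == 3)%:R) by apply: (@lcX _ _ xs 3));
  (have -> : A5 = lc xs (fun i => (i == 4)%:R) by apply: (@lcX _ _ xs 4));
  (have -> : A6 = lc xs (fun i => (i == 5)%:R) by apply: (@lcX _ _ xs 5));
  lc_fold; lc_close.

Lemma Mx_der (U : lmodType K) a b c d (f : Abar -> Abar -> Abar -> U) :
  Dp a -> Dp b -> Dp c -> Dp d -> tril f ->
  Mx a b (c * d) f = Mx a b c (fR d f) + Mx a b d (fL c f).
Proof.
move=> ha hb hc hd hf.
have tR := tril_fR d hf; have tL := tril_fL c hf.
rewrite !kappa_Tv //.
rewrite (Tv_der Heps addb) // (Tv_der Heps hind') // (Tv_der Heps Fdb) //.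
set A1 := Tv (bracket_add ind F) a b c _; set A2 := Tv (bracket_add ind F) a b d _.
set A3 := Tv ind a b c _; set A4 := Tv ind a b d _.
set A5 := Tv F a b c _; set A6 := Tv F a b d _.
lc6 A1 A2 A3 A4 A5 A6.
Qed.

Lemma Mx_lin3 (U : lmodType K) a b c c' k (f : Abar -> Abar -> Abar -> U) :
  Dp a -> Dp b -> Dp c -> Dp c' -> tril f ->
  Mx a b (k *: c + c') f = k *: Mx a b c f + Mx a b c' f.
Proof.
move=> ha hb hc hc' hf.
rewrite !kappa_Tv //.
rewrite (Tv_lin3 Heps addb) // (Tv_lin3 Heps hind') // (Tv_lin3 Heps Fdb) //.
set A1 := Tv (bracket_add ind F) a b c _; set A2 := Tv (bracket_add ind F) a b c' _.
set A3 := Tv ind a b c _; set A4 := Tv ind a b c' _.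
set A5 := Tv F a b c _; set A6 := Tv F a b c' _.
lc6 A1 A2 A3 A4 A5 A6.
Qed.

Lemma Mx_cyc (U : lmodType K) a b c (f : Abar -> Abar -> Abar -> U) : tril f ->
  Mx a b c f = Mx c a b (rot2 f).
Proof.
move=> hf; rewrite !kappa_Tv //; last exact: tril_rot2.
by rewrite [Tv (bracket_add _ _) a b c f]Tv_cyc [Tv ind a b c f]Tv_cyc [Tv F a b c f]Tv_cyc.
Qed.

Lemma kappa_SW (U : lmodType K) a b c (f : Abar -> Abar -> Abar -> U) : tril f ->
  Mx a b c f = SW ind a (F b c) f + SW F a (ind b c) f + SW ind b (F c a) (rot f) +
     SW F b (ind c a) (rot f) + SW ind c (F a b) (rot2 f) + SW F c (ind a b) (rot2 f).
Proof.
move=> hf; rewrite kappa_Tv // /Tv [SW _ a _ f]SW_add [SW _ b _ (rot f)]SW_add [SW _ c _ (rot2 f)]SW_add.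
set A1 := SW ind a (ind b c) f; set A2 := SW F a (ind b c) f.
set A3 := SW ind a (F b c) f; set A4 := SW F a (F b c) f.
set B1 := SW ind b (ind c a) (rot f); set B2 := SW F b (ind c a) (rot f).
set B3 := SW ind b (F c a) (rot f); set B4 := SW F b (F c a) (rot f).
set C1 := SW ind c (ind a b) (rot2 f); set C2 := SW F c (ind a b) (rot2 f).
set C3 := SW ind c (F a b) (rot2 f); set C4 := SW F c (F a b) (rot2 f).
set xs := [:: A1; A2; A3; A4; B1; B2; B3; B4; C1; C2; C3; C4].
have -> : A1 = lc xs (fun i => (i == 0)%:R) by apply: (@lcX _ _ xs 0).
have -> : A2 = lc xs (fun i => (i == 1)%:R) by apply: (@lcX _ _ xs 1).
have -> : A3 = lc xs (fun i => (i == 2)%:R) by apply: (@lcX _ _ xs 2).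
have -> : A4 = lc xs (fun i => (i == 3)%:R) by apply: (@lcX _ _ xs 3).
have -> : B1 = lc xs (fun i => (i == 4)%:R) by apply: (@lcX _ _ xs 4).
have -> : B2 = lc xs (fun i => (i == 5)%:R) by apply: (@lcX _ _ xs 5).
have -> : B3 = lc xs (fun i => (i == 6)%:R) by apply: (@lcX _ _ xs 6).
have -> : B4 = lc xs (fun i => (i == 7)%:R) by apply: (@lcX _ _ xs 7).
have -> : C1 = lc xs (fun i => (i == 8)%:R) by apply: (@lcX _ _ xs 8).
have -> : C2 = lc xs (fun i => (i == 9)%:R) by apply: (@lcX _ _ xs 9).
have -> : C3 = lc xs (fun i => (i == 10)%:R) by apply: (@lcX _ _ xs 10).
have -> : C4 = lc xs (fun i => (i == 11)%:R) by apply: (@lcX _ _ xs 11).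
lc_fold; lc_close.
Qed.

Lemma base (U : lmodType K) sp sm x tp tm y up um z (f : Abar -> Abar -> Abar -> U) :
  corner e sp sm x -> corner e tp tm y -> corner e up um z -> tril f ->
  Mx (gn sp sm x) (gn tp tm y) (gn up um z) f = 0.
Proof.
move=> hx hy hz hf.
have F1 := FamZ hx hy hz hf.
have F2 := FamZ hy hz hx (tril_rot hf).
have F3 := FamZ hz hx hy (tril_rot2 hf).
rewrite kappa_SW // (Asplit hx hy hz hf) (Asplit hy hz hx (tril_rot hf)) (Asplit hz hx hy (tril_rot2 hf)).
have H := congr2 +%R (congr2 +%R F1 F2) F3; rewrite !addr0 in H; rewrite -H.
move: (gn sp sm x) (gn tp tm y) (gn up um z) => a b c.
rewrite /rot /rot2 /=.
set T1 := Abpart a b c _ _ _ _; set T2 := Acpart b c a _ _ _ _; set T3 := SW F c _ _.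
set T4 := Abpart b c a _ _ _ _; set T5 := Acpart c a b _ _ _ _; set T6 := SW F a _ _.
set T7 := Abpart c a b _ _ _ _; set T8 := Acpart a b c _ _ _ _; set T9 := SW F b _ _.
set xs := [:: T1; T2; T3; T4; T5; T6; T7; T8; T9].
have -> : T1 = lc xs (fun i => (i == 0)%:R) by apply: (@lcX _ _ xs 0).
have -> : T2 = lc xs (fun i => (i == 1)%:R) by apply: (@lcX _ _ xs 1).
have -> : T3 = lc xs (fun i => (i == 2)%:R) by apply: (@lcX _ _ xs 2).
have -> : T4 = lc xs (fun i => (i == 3)%:R) by apply: (@lcX _ _ xs 3).
have -> : T5 = lc xs (fun i => (i == 4)%:R) by apply: (@lcX _ _ xs 4).
have -> : T6 = lc xs (fun i => (i == 5)%:R) by apply: (@lcX _ _ xs 5).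
have -> : T7 = lc xs (fun i => (i == 6)%:R) by apply: (@lcX _ _ xs 6).
have -> : T8 = lc xs (fun i => (i == 7)%:R) by apply: (@lcX _ _ xs 7).
have -> : T9 = lc xs (fun i => (i == 8)%:R) by apply: (@lcX _ _ xs 8).
lc_fold; lc_close.
Qed.

Lemma ind3 a b : Dp a -> Dp b ->
  (forall (U : lmodType K) sp sm x (f : Abar -> Abar -> Abar -> U), corner e sp sm x -> tril f -> Mx a b (gn sp sm x) f = 0) ->
  forall c, Sp c -> forall (U : lmodType K) (f : Abar -> Abar -> Abar -> U), tril f -> Mx a b c f = 0.
Proof.
move=> ha hb hbase c; elim => [sp sm x hc | k u v su IHu sv IHv | u v su IHu sv IHv] U f hf.
- exact: hbase.
- by rewrite Mx_lin3 ?IHu ?IHv ?scaler0 ?addr0 //; apply: Sp_D.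
- rewrite Mx_der ?IHu ?IHv ?addr0 //; try apply: Sp_D => //.
  + exact: tril_fL.
  + exact: tril_fR.
Qed.

Lemma all_zero a b c : Sp a -> Sp b -> Sp c ->
  forall (U : lmodType K) (f : Abar -> Abar -> Abar -> U), tril f -> Mx a b c f = 0.
Proof.
have S1 : forall sp sm x tp tm y, corner e sp sm x -> corner e tp tm y ->
    forall c, Sp c -> forall (U : lmodType K) (f : Abar -> Abar -> Abar -> U), tril f ->
    Mx (gn sp sm x) (gn tp tm y) c f = 0.
  move=> sp sm x tp tm y hx hy; apply: ind3; try apply: gen_D.
  by move=> U up um z f hz hf; apply: base.
have S3 : forall sp sm x, corner e sp sm x -> forall a, Sp a -> forall b, Sp b ->
    forall (U : lmodType K) (f : Abar -> Abar -> Abar -> U), tril f -> Mx (gn sp sm x) a b f = 0.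
  move=> sp sm x hx a' sa; apply: ind3; [apply: gen_D | exact: Sp_D sa |].
  move=> U tp tm y f hy hf; rewrite Mx_cyc //; apply: S1 => //; exact: tril_rot2.
move=> sa sb sc; apply: (ind3 (Sp_D sa) (Sp_D sb)) => //.
move=> U sp sm x f hx hf; rewrite Mx_cyc //; apply: S3 => //; exact: tril_rot2.
Qed.

Theorem main_result : forall a b c : Abar, inAf e iota a -> inAf e iota b -> inAf e iota c ->
    tzero3 (kappa ind (fus_bracket E1 E2) a b c).
Proof.
move=> a b c ha hb hc U f hf.
exact: (all_zero (Dp_Sp ha) (Dp_Sp hb) (Dp_Sp hc) hf).
Qed.

End Brk.

End Main.

End Main_.
Import Main_.

Theorem lemma2p20 (K : fieldType) (charK0 : [pchar K] =i pred0)
  (A : algType K) (N : nat) (hN : (2 <= N)%N) (e : nat -> A)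
  (he : idempotent_system N e)
  (br : A -> A -> tens2 A)
  (hbr : double_bracket (fun _ => True) (inB N e) br)
  (Abar : algType K) (iota : A -> Abar) (g12 g21 : Abar)
  (hfus : is_fusion_product (e 1%N) (e 2%N) iota g12 g21)
  (ind : Abar -> Abar -> tens2 Abar)
  (hind : double_bracket (inAf e iota) (inBf N e iota) ind)
  (hindgen : ind_on_generators e iota g12 g21 br ind)
  (E1 E2 : Abar -> tens2 Abar)
  (hE1 : double_derivation (inAf e iota) (inBf N e iota) E1)
  (hE1gen : TrE1_on_generators e iota g12 g21 E1)
  (hE2 : double_derivation (inAf e iota) (inBf N e iota) E2)
  (hE2gen : TrE2_on_generators e iota g12 g21 E2) :
  forall a b c : Abar, inAf e iota a -> inAf e iota b -> inAf e iota c ->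
    tzero3 (kappa ind (fus_bracket E1 E2) a b c).
Proof.
move=> a b c ha hb hc.
exact: (main_result hN he hfus hind hindgen hE1 hE1gen hE2 hE2gen ha hb hc).
Qed.
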